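(* Let $a,b>0$, $p>1$, and let $x^*\in\mathbb{R}^2$ be fixed. If $x^*\in\mathcal{D}_p$, then its metric projection onto $\mathcal{D}_p$ is $x^*$. Otherwise, if $x^*\in\mathbb{R}^2\setminus\mathcal{D}_p$, then for any initial integer $k\ge 3$, the sequence $(x^n)_{n\ge1}$ generated by the algorithm described below converges to the metric projection of $x^*$ onto the superellipse $\mathcal{C}_p$ (the point of $\mathcal{C}_p$ nearest to $x^*$).
   Context: $\|(x,y)\|_p=\left(|x/a|^p+|y/b|^p\right)^{1/p}$; $\mathcal{C}_p=\{(x,y)\mid |x/a|^p+|y/b|^p=1\}$; $\mathcal{D}_p=\{(x,y)\mid |x/a|^p+|y/b|^p\le1\}=\operatorname{conv}(\mathcal{C}_p)$. Distances and metric projections are Euclidean. For an integer $m\ge3$, $\mathcal{P}_{p,m}$ is the closed polygon with vertices $P^{(m)}_t=\varphi_p\!\left(\cos\frac{2t\pi}{m},\sin\frac{2t\pi}{m}\right)$, $t=0,\dots,m-1$, where $\varphi_p(u,v)=(u,v)/\|(u,v)\|_p$, and edges $[P^{(m)}_t,P^{(m)}_{t+1}]$ (indices mod $m$); $\mathcal{Q}_{p,m}=\operatorname{conv}(\mathcal{P}_{p,m})$. Algorithm (for $x^*\notin\mathcal{D}_p$, initial $k\ge3$): Step 1: $x^1$ is the metric projection of $x^*$ onto $\mathcal{P}_{p,k}$; it lies either in the relative interior of a unique edge $[P^{(k)}_t,P^{(k)}_{t+1}]$ or equals a vertex $P^{(k)}_t$. Refinement step: given $x^n$ the projection of $x^*$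 onto $\mathcal{P}_{p,m}$ ($m=2^{n-1}k$), pass to $\mathcal{P}_{p,2m}$ with vertices $Q_l=P^{(2m)}_l$ (so $P^{(m)}_t=Q_{2t}$). If $x^n$ lies in the relative interior of the edge $[P^{(m)}_t,P^{(m)}_{t+1}]$, compute the projections of $x^*$ onto the edges $[Q_{2t},Q_{2t+1}]$ and $[Q_{2t+1},Q_{2t+2}]$; if $x^n=P^{(m)}_t$, compute the projections of $x^*$ onto $[Q_{2t-1},Q_{2t}]$ and $[Q_{2t},Q_{2t+1}]$ (indices mod $2m$). Then $x^{n+1}$ is whichever of these two projections is nearer to $x^*$; it is the metric projection of $x^*$ onto $\mathcal{P}_{p,2m}$. *)

(* Defs.v *)
From Stdlib Require Import Reals Lra.
Open Scope R_scope.

(* |u|^p for real p > 0, with the convention |0|^p = 0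
   (Stdlib's Rpower 0 p would give 1, hence the case split). *)
Definition abspow (u p : R) : R :=
  if Req_EM_T u 0 then 0 else Rpower (Rabs u) p.

Definition pnorm (a b p : R) (z : R * R) : R :=
  let s := abspow (fst z / a) p + abspow (snd z / b) p in
  if Req_EM_T s 0 then 0 else Rpower s (1 / p).

Definition inC (a b p : R) (z : R * R) : Prop :=
  abspow (fst z / a) p + abspow (snd z / b) p = 1.
Definition inD (a b p : R) (z : R * R) : Prop :=
  abspow (fst z / a) p + abspow (snd z / b) p <= 1.

Definition dist2 (z w : R * R) : R :=
  sqrt ((fst z - fst w) ^ 2 + (snd z - snd w) ^ 2).

Definition is_proj (S : R * R -> Prop) (x y : R * R) : Prop :=
  S y /\ forall z, S z -> dist2 x y <= dist2 x z.

Definition phi (a b p : R) (z : R * R) : R * R :=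
  (fst z / pnorm a b p z, snd z / pnorm a b p z).

Definition vertex (a b p : R) (m t : nat) : R * R :=
  phi a b p (cos (2 * INR t * PI / INR m), sin (2 * INR t * PI / INR m)).

Definition seg (A B : R * R) (z : R * R) : Prop :=
  exists s, 0 <= s <= 1 /\ z = ((1 - s) * fst A + s * fst B, (1 - s) * snd A + s * snd B).
Definition relint_seg (A B : R * R) (z : R * R) : Prop :=
  exists s, 0 < s < 1 /\ z = ((1 - s) * fst A + s * fst B, (1 - s) * snd A + s * snd B).

Definition polygon (a b p : R) (m : nat) (z : R * R) : Prop :=
  exists t, (t < m)%nat /\ seg (vertex a b p m t) (vertex a b p m (S t)) z.

Definition nearer_proj (S1 S2 : R * R -> Prop) (x y : R * R) : Prop :=
  exists y1 y2, is_proj S1 x y1 /\ is_proj S2 x y2 /\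
    ((y = y1 /\ dist2 x y1 <= dist2 x y2) \/ (y = y2 /\ dist2 x y2 <= dist2 x y1)).

(* one refinement step of the algorithm: from x^n (projection onto P_{p,m})
   to x^{n+1}, with Q_l = P^{(2m)}_l. Index 2t-1 (mod 2m) is written 2t+2m-1. *)
Definition refine_step (a b p : R) (m : nat) (xs xn xn1 : R * R) : Prop :=
  let Q := vertex a b p (2 * m) in
  (forall t, (t < m)%nat ->
     relint_seg (vertex a b p m t) (vertex a b p m (S t)) xn ->
     nearer_proj (seg (Q (2 * t)%nat) (Q (2 * t + 1)%nat))
                 (seg (Q (2 * t + 1)%nat) (Q (2 * t + 2)%nat)) xs xn1) /\
  (forall t, (t < m)%nat ->
     xn = vertex a b p m t ->
     nearer_proj (seg (Q (2 * t + 2 * m - 1)%nat) (Q (2 * t)%nat))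
                 (seg (Q (2 * t)%nat) (Q (2 * t + 1)%nat)) xs xn1).

Definition converges (x : nat -> R * R) (y : R * R) : Prop :=
  forall eps, 0 < eps -> exists N, forall n, (N <= n)%nat -> dist2 (x n) y < eps.

(* Main.v *)
Require Import Defs.
From Stdlib Require Import Reals Lra Lia Psatz Arith Classical.
Open Scope R_scope.

Module A.
Open Scope R_scope.

Lemma exp_tangent (z m : R) : exp m * (1 + (z - m)) <= exp z.
Proof.
  replace (exp z) with (exp m * exp (z - m)).
  - apply Rmult_le_compat_l; [left; apply exp_pos| apply exp_ineq1_le].
  - rewrite <- exp_plus; f_equal; ring.
Qed.

Lemma exp_tangent_strict (z m : R) : z <> m -> exp m * (1 + (z - m)) < exp z.
Proof.
  intro H.
  replace (exp z) with (exp m * exp (z - m)).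
  - apply Rmult_lt_compat_l; [apply exp_pos| apply exp_ineq1; lra].
  - rewrite <- exp_plus; f_equal; ring.
Qed.

Lemma bern_strict (p s : R) : 1 < p -> 0 < s -> s <> 1 ->
  1 + p * (s - 1) < Rpower s p.
Proof.
  intros hp hs hs1.
  unfold Rpower.
  set (L := ln s).
  assert (HL : L <> 0).
  { intro H0. apply hs1. unfold L in H0. rewrite <- (exp_ln s hs), H0. apply exp_0. }
  assert (Hs : s = exp L) by (unfold L; rewrite exp_ln; auto).
  (* exp L = exp ((1/p)(pL) + (1-1/p)0) < (1/p) exp(pL) + (1-1/p) *)
  set (m := L).
  assert (h1 := exp_tangent_strict (p * L) m).
  assert (h2 := exp_tangent 0 m).
  assert (p * L <> m) by (unfold m; intro H; apply HL; nra).
  specialize (h1 H).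
  rewrite exp_0 in h2.
  assert (Hp : 0 < /p) by (apply Rinv_0_lt_compat; lra).
  rewrite Hs.
  assert (0 < exp m) by apply exp_pos.
  unfold m in *.
  assert (E : /p * (exp L * (1 + (p * L - L))) + (1 - /p) * (exp L * (1 + (0 - L))) = exp L).
  { field. lra. }
  assert (/p * (exp L * (1 + (p * L - L))) < /p * exp (p * L)) by (apply Rmult_lt_compat_l; lra).
  assert ((1 - /p) * (exp L * (1 + (0 - L))) <= (1 - /p) * 1).
  { apply Rmult_le_compat_l; [|lra]. assert (/p < 1). { rewrite <- Rinv_1. apply Rinv_lt_contravar; lra. } lra. }
  assert (exp L < /p * exp (p*L) + (1 - /p)) by lra.
  assert (p * exp L < exp (p*L) + p - 1).
  { replace (exp (p*L) + p - 1) with (p * (/p * exp (p*L) + (1 - /p))) by (field; lra). nra. }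
  lra.
Qed.

Lemma div_ge0 x y : 0 <= x -> 0 < y -> 0 <= x / y.
Proof. intros. unfold Rdiv. apply Rmult_le_pos; auto. left; apply Rinv_0_lt_compat; auto. Qed.
Lemma div_le1 x y : x <= y -> 0 < y -> x / y <= 1.
Proof. intros. apply Rmult_le_reg_r with y; auto. unfold Rdiv. rewrite Rmult_assoc, Rinv_l by lra. lra. Qed.
Lemma div_lt1 x y : x < y -> 0 < y -> x / y < 1.
Proof. intros. apply Rmult_lt_reg_r with y; auto. unfold Rdiv. rewrite Rmult_assoc, Rinv_l by lra. lra. Qed.

Section Pow.
Variable p : R.
Hypothesis hp : 1 < p.

Lemma ap0 : abspow 0 p = 0.
Proof. unfold abspow. destruct (Req_EM_T 0 0); [reflexivity| congruence]. Qed.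

Lemma apnz u : u <> 0 -> abspow u p = Rpower (Rabs u) p.
Proof. intro. unfold abspow. destruct (Req_EM_T u 0); [congruence|reflexivity]. Qed.

Lemma ap_pos u : u <> 0 -> 0 < abspow u p.
Proof. intro. rewrite apnz; auto. unfold Rpower. apply exp_pos. Qed.

Lemma ap_ge0 u : 0 <= abspow u p.
Proof. destruct (Req_EM_T u 0). subst; rewrite ap0; lra. left; apply ap_pos; auto. Qed.

Lemma ap_abs u : abspow (Rabs u) p = abspow u p.
Proof.
  destruct (Req_EM_T u 0). subst. rewrite Rabs_R0; auto.
  rewrite !apnz; auto. rewrite Rabs_Rabsolu; auto. apply Rabs_no_R0; auto.
Qed.

Lemma ap_opp u : abspow (- u) p = abspow u p.
Proof. rewrite <- ap_abs, Rabs_Ropp, ap_abs. reflexivity. Qed.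

Lemma ap_mul c u : 0 < c -> abspow (c * u) p = Rpower c p * abspow u p.
Proof.
  intro hc. destruct (Req_EM_T u 0).
  - subst. rewrite Rmult_0_r, ap0. ring.
  - rewrite !apnz; auto. rewrite Rabs_mult, Rabs_pos_eq by lra.
    symmetry; apply Rpower_mult_distr; auto. apply Rabs_pos_lt; auto.
    intro H. apply Rmult_integral in H. destruct H; lra.
Qed.

Lemma ap_1 : abspow 1 p = 1.
Proof. rewrite apnz by lra. rewrite Rabs_R1. unfold Rpower. rewrite ln_1, Rmult_0_r, exp_0. auto. Qed.

Lemma ap_lt u v : 0 <= u -> u < v -> abspow u p < abspow v p.
Proof.
  intros hu huv. destruct (Req_EM_T u 0).
  - subst. rewrite ap0. apply ap_pos; lra.
  - rewrite !apnz by lra. rewrite !Rabs_pos_eq by lra. apply Rlt_Rpower_l; lra.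
Qed.

Lemma ap_le u v : 0 <= u -> u <= v -> abspow u p <= abspow v p.
Proof. intros. destruct (Req_dec u v). subst; lra. left; apply ap_lt; lra. Qed.

Lemma ap_tangent c w : 0 < c -> 0 <= w ->
  abspow c p + (p * abspow c p / c) * (w - c) <= abspow w p.
Proof.
  intros hc hw.
  assert (Hc : 0 < abspow c p) by (apply ap_pos; lra).
  destruct (Req_dec w c). subst. lra.
  destruct (Req_dec w 0).
  - subst. rewrite ap0. assert (p * abspow c p / c * (0 - c) = - p * abspow c p) by (field; lra). nra.
  - set (s := w / c).
    assert (hs : 0 < s) by (unfold s; apply Rdiv_lt_0_compat; lra).
    assert (hs1 : s <> 1) by (unfold s; intro H1; apply H; field_simplify_eq in H1; lra).
    assert (Hw : w = c * s) by (unfold s; field; lra).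
    rewrite Hw, ap_mul by lra.
    rewrite (apnz s) by lra. rewrite Rabs_pos_eq by lra.
    rewrite (apnz c) by lra. rewrite Rabs_pos_eq by lra.
    rewrite (apnz c) in Hc by lra. rewrite Rabs_pos_eq in Hc by lra.
    assert (B := bern_strict p s hp hs hs1).
    replace (Rpower c p + p * Rpower c p / c * (c * s - c)) with (Rpower c p * (1 + p * (s - 1))) by (field; lra).
    apply Rmult_le_compat_l; lra.
Qed.

Lemma ap_tangent_strict c w : 0 < c -> 0 <= w -> w <> c ->
  abspow c p + (p * abspow c p / c) * (w - c) < abspow w p.
Proof.
  intros hc hw hwc.
  assert (Hc : 0 < abspow c p) by (apply ap_pos; lra).
  destruct (Req_dec w 0).
  - subst. rewrite ap0. assert (p * abspow c p / c * (0 - c) = - p * abspow c p) by (field; lra). nra.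
  - set (s := w / c).
    assert (hs : 0 < s) by (unfold s; apply Rdiv_lt_0_compat; lra).
    assert (hs1 : s <> 1) by (unfold s; intro H1; apply hwc; field_simplify_eq in H1; lra).
    assert (Hw : w = c * s) by (unfold s; field; lra).
    rewrite Hw, ap_mul by lra.
    rewrite (apnz s) by lra. rewrite Rabs_pos_eq by lra.
    rewrite (apnz c) by lra. rewrite Rabs_pos_eq by lra.
    rewrite (apnz c) in Hc by lra. rewrite Rabs_pos_eq in Hc by lra.
    assert (B := bern_strict p s hp hs hs1).
    replace (Rpower c p + p * Rpower c p / c * (c * s - c)) with (Rpower c p * (1 + p * (s - 1))) by (field; lra).
    apply Rmult_lt_compat_l; lra.
Qed.

Lemma ap_conv_pos u v t : 0 <= u -> 0 <= v -> 0 <= t <= 1 ->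
  abspow ((1 - t) * u + t * v) p <= (1 - t) * abspow u p + t * abspow v p.
Proof.
  intros hu hv ht.
  set (c := (1 - t) * u + t * v).
  destruct (Req_dec c 0) as [Hc|Hc].
  - rewrite Hc, ap0. assert (0 <= abspow u p) by apply ap_ge0. assert (0 <= abspow v p) by apply ap_ge0. nra.
  - assert (hc : 0 < c) by (unfold c in *; nra).
    assert (T1 := ap_tangent c u hc hu). assert (T2 := ap_tangent c v hc hv).
    set (K := p * abspow c p / c) in *.
    assert ((1 - t) * (abspow c p + K * (u - c)) + t * (abspow c p + K * (v - c)) = abspow c p).
    { clearbody K. unfold c. ring. }
    nra.
Qed.

Lemma ap_conv_pos_strict u v t : 0 <= u -> 0 <= v -> 0 < t < 1 -> u <> v ->
  abspow ((1 - t) * u + t * v) p < (1 - t) * abspow u p + t * abspow v p.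
Proof.
  intros hu hv ht huv.
  set (c := (1 - t) * u + t * v).
  assert (hc : 0 < c) by (unfold c in *; destruct (Req_dec u 0); destruct (Req_dec v 0); nra).
  assert (hcu : u <> c) by (unfold c; intro; apply huv; nra).
  assert (T1 := ap_tangent_strict c u hc hu hcu). assert (T2 := ap_tangent c v hc hv).
  set (K := p * abspow c p / c) in *.
  assert ((1 - t) * (abspow c p + K * (u - c)) + t * (abspow c p + K * (v - c)) = abspow c p).
  { clearbody K. unfold c. ring. }
  nra.
Qed.

Lemma ap_conv u v t : 0 <= t <= 1 ->
  abspow ((1 - t) * u + t * v) p <= (1 - t) * abspow u p + t * abspow v p.
Proof.
  intros ht.
  rewrite <- (ap_abs ((1 - t) * u + t * v)), <- (ap_abs u), <- (ap_abs v).
  eapply Rle_trans; [| apply ap_conv_pos; auto; apply Rabs_pos].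
  apply ap_le. apply Rabs_pos.
  eapply Rle_trans; [apply Rabs_triang|].
  rewrite !Rabs_mult, (Rabs_pos_eq t), (Rabs_pos_eq (1-t)) by lra. lra.
Qed.

Lemma ap_conv_strict u v t : 0 < t < 1 -> u <> v ->
  abspow ((1 - t) * u + t * v) p < (1 - t) * abspow u p + t * abspow v p.
Proof.
  intros ht huv.
  rewrite <- (ap_abs ((1 - t) * u + t * v)), <- (ap_abs u), <- (ap_abs v).
  assert (Htr : Rabs ((1 - t) * u + t * v) <= (1 - t) * Rabs u + t * Rabs v).
  { eapply Rle_trans; [apply Rabs_triang|].
    rewrite !Rabs_mult, (Rabs_pos_eq t), (Rabs_pos_eq (1-t)) by lra. lra. }
  destruct (Req_dec (Rabs u) (Rabs v)) as [He|Hne].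
  -
    assert (Hv : v = - u).
    { destruct (Rabs_pos u); destruct (Rcase_abs u); destruct (Rcase_abs v);
      revert He; unfold Rabs; destruct (Rcase_abs u); destruct (Rcase_abs v); intros; lra. }
    subst v. assert (u <> 0) by (intro; apply huv; subst; lra).
    assert (Rabs ((1 - t) * u + t * - u) < (1 - t) * Rabs u + t * Rabs (- u)).
    { rewrite Rabs_Ropp. replace ((1 - t) * u + t * - u) with ((1 - 2 * t) * u) by ring.
      rewrite Rabs_mult. assert (0 < Rabs u) by (apply Rabs_pos_lt; auto).
      assert (Rabs (1 - 2*t) < 1) by (unfold Rabs; destruct (Rcase_abs (1 - 2*t)); lra). nra. }
    eapply Rlt_le_trans; [apply ap_lt; [apply Rabs_pos| exact H0]|].
    apply ap_conv_pos; auto; try apply Rabs_pos; lra.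
  - eapply Rle_lt_trans; [apply ap_le; [apply Rabs_pos| exact Htr]|].
    apply ap_conv_pos_strict; auto; apply Rabs_pos.
Qed.

Lemma ap_le_self u : 0 <= u <= 1 -> abspow u p <= u.
Proof.
  intros hu. assert (H := ap_conv_pos 0 1 u ltac:(lra) ltac:(lra) hu).
  rewrite ap0, ap_1 in H. replace ((1 - u) * 0 + u * 1) with u in H by ring. lra.
Qed.

Lemma Rpower_le_self c : 0 < c <= 1 -> Rpower c p <= c.
Proof.
  intros. assert (H0 := ap_le_self c ltac:(lra)). rewrite apnz, Rabs_pos_eq in H0 by lra. auto.
Qed.

Lemma continuity_abspow x : continuity_pt (fun u => abspow u p) x.
Proof.
  destruct (Req_dec x 0) as [Hx|Hx].
  - subst. intros eps heps. exists (Rmin 1 eps). split. apply Rmin_pos; lra.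
    intros y [_ Hy]. unfold dist in *; simpl in *; unfold R_dist in *.
    rewrite ap0. rewrite Rminus_0_r in *. try rewrite Rminus_0_r.
    rewrite Rabs_pos_eq by apply ap_ge0.
    rewrite <- ap_abs. eapply Rle_lt_trans. apply ap_le_self. split. apply Rabs_pos.
    assert (Rmin 1 eps <= 1) by apply Rmin_l. lra.
    assert (Rmin 1 eps <= eps) by apply Rmin_r. lra.
  - apply continuity_pt_locally_ext with (f := fun u => exp (p * ln (Rabs u))) (a := Rabs x).
    apply Rabs_pos_lt; auto.
    intros y Hy. rewrite apnz. reflexivity. intro; subst.
    unfold R_dist in Hy. rewrite Rminus_0_l, Rabs_Ropp in Hy. lra.
    apply continuity_pt_comp with (f1 := fun u => p * ln (Rabs u)) (f2 := exp).
    + apply continuity_pt_scal. apply continuity_pt_comp with (f1 := Rabs) (f2 := ln).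
      apply Rcontinuity_abs.
      apply derivable_continuous_pt. exists (/ Rabs x).
      apply derivable_pt_lim_ln. apply Rabs_pos_lt; auto.
    + apply derivable_continuous_pt, derivable_pt_exp.
Qed.

End Pow.

End A.
Import A.

Module B.
Open Scope R_scope.
Set Default Proof Using "All".

Section Fsec.
Variables a b p : R.
Hypothesis ha : 0 < a.
Hypothesis hb : 0 < b.
Hypothesis hp : 1 < p.

Definition FF (z : R * R) : R := abspow (fst z / a) p + abspow (snd z / b) p.

Lemma FF_ge0 z : 0 <= FF z.
Proof. unfold FF. generalize (ap_ge0 p (fst z / a)) (ap_ge0 p (snd z / b)). lra. Qed.

Lemma FF_zero x y : FF (x, y) = 0 -> x = 0 /\ y = 0.
Proof.
  unfold FF; simpl. intro H.
  generalize (ap_ge0 p (x / a)) (ap_ge0 p (y / b)); intros.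
  split.
  - destruct (Req_dec x 0); auto. assert (x / a <> 0) by (unfold Rdiv; apply Rmult_integral_contrapositive_currified; [auto| apply Rinv_neq_0_compat; lra]).
    generalize (ap_pos p (x/a) H3). lra.
  - destruct (Req_dec y 0); auto. assert (y / b <> 0) by (unfold Rdiv; apply Rmult_integral_contrapositive_currified; [auto| apply Rinv_neq_0_compat; lra]).
    generalize (ap_pos p (y/b) H3). lra.
Qed.

Lemma FF_pos x y : (x, y) <> (0, 0) -> 0 < FF (x, y).
Proof.
  intro H. destruct (FF_ge0 (x, y)); auto. symmetry in H0. apply FF_zero in H0. destruct H0; subst; congruence.
Qed.

Lemma FF_scale c x y : 0 < c -> FF (c * x, c * y) = Rpower c p * FF (x, y).
Proof.
  intro hc. unfold FF; simpl.
  replace (c * x / a) with (c * (x / a)) by (field; lra).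
  replace (c * y / b) with (c * (y / b)) by (field; lra).
  rewrite !ap_mul by lra. ring.
Qed.

Lemma FF_0 : FF (0, 0) = 0.
Proof. unfold FF; simpl. unfold Rdiv. rewrite !Rmult_0_l, ap0. ring. Qed.

Lemma pnorm_eq z : z <> (0,0) -> pnorm a b p z = Rpower (FF z) (1 / p).
Proof.
  intro H. destruct z as [x y]. unfold pnorm. fold (FF (x, y)).
  destruct (Req_EM_T (FF (x, y)) 0). generalize (FF_pos x y H); lra. reflexivity.
Qed.

Lemma pnorm_pos z : z <> (0,0) -> 0 < pnorm a b p z.
Proof. intro. rewrite pnorm_eq; auto. unfold Rpower. apply exp_pos. Qed.

Lemma Rpower_inv_p y : 0 < y -> Rpower (Rpower y (1 / p)) p = y.
Proof.
  intro. rewrite Rpower_mult. replace (1 / p * p) with 1 by (field; lra). apply Rpower_1; auto.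
Qed.

Lemma FF_phi z : z <> (0,0) -> FF (phi a b p z) = 1.
Proof.
  intro H. destruct z as [x y]. unfold phi; simpl.
  set (N := pnorm a b p (x, y)).
  assert (hN : 0 < N) by (apply pnorm_pos; auto).
  replace (x / N) with (/ N * x) by (field; lra). replace (y / N) with (/ N * y) by (field; lra).
  rewrite FF_scale by (apply Rinv_0_lt_compat; auto).
  unfold N. rewrite pnorm_eq by auto.
  assert (hF := FF_pos x y H).
  rewrite Rinv_Rdiv_depr || idtac.
  replace (/ Rpower (FF (x, y)) (1 / p)) with (Rpower (FF (x, y)) (- (1 / p))) by (rewrite Rpower_Ropp; reflexivity).
  rewrite Rpower_mult. replace (- (1 / p) * p) with (- (1)) by (field; lra).
  rewrite Rpower_Ropp, Rpower_1 by auto. field. lra.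
Qed.

Lemma FF_conv z z' t : 0 <= t <= 1 ->
  FF ((1 - t) * fst z + t * fst z', (1 - t) * snd z + t * snd z') <= (1 - t) * FF z + t * FF z'.
Proof.
  intro ht. unfold FF; simpl.
  replace (((1 - t) * fst z + t * fst z') / a) with ((1 - t) * (fst z / a) + t * (fst z' / a)) by (field; lra).
  replace (((1 - t) * snd z + t * snd z') / b) with ((1 - t) * (snd z / b) + t * (snd z' / b)) by (field; lra).
  generalize (ap_conv p hp (fst z / a) (fst z' / a) t ht) (ap_conv p hp (snd z / b) (snd z' / b) t ht). lra.
Qed.

Lemma FF_conv_strict z z' t : 0 < t < 1 -> z <> z' ->
  FF ((1 - t) * fst z + t * fst z', (1 - t) * snd z + t * snd z') < (1 - t) * FF z + t * FF z'.
Proof.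
  intros ht hz. unfold FF; simpl.
  replace (((1 - t) * fst z + t * fst z') / a) with ((1 - t) * (fst z / a) + t * (fst z' / a)) by (field; lra).
  replace (((1 - t) * snd z + t * snd z') / b) with ((1 - t) * (snd z / b) + t * (snd z' / b)) by (field; lra).
  assert (ht' : 0 <= t <= 1) by lra.
  generalize (ap_conv p hp (fst z / a) (fst z' / a) t ht') (ap_conv p hp (snd z / b) (snd z' / b) t ht').
  destruct z as [x y]; destruct z' as [x' y']; simpl.
  destruct (Req_dec x x').
  - assert (y <> y') by (intro; apply hz; subst; auto).
    assert (y / b <> y' / b) by (intro; apply H0; field_simplify_eq in H1; lra).
    generalize (ap_conv_strict p hp (y / b) (y' / b) t ht H1). lra.
  - assert (x / a <> x' / a) by (intro; apply H; field_simplify_eq in H0; lra).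
    generalize (ap_conv_strict p hp (x / a) (x' / a) t ht H0). lra.
Qed.

Lemma FF_comb l m A B : 0 <= l -> 0 <= m -> l + m <= 1 ->
  FF (l * fst A + m * fst B, l * snd A + m * snd B) <= l * FF A + m * FF B.
Proof.
  intros hl hm hlm.
  destruct (Req_dec (l + m) 0).
  - assert (l = 0) by lra. assert (m = 0) by lra. subst.
    replace (0 * fst A + 0 * fst B) with 0 by ring. replace (0 * snd A + 0 * snd B) with 0 by ring.
    rewrite FF_0. lra.
  - set (s := l + m). assert (hs : 0 < s) by (unfold s; lra).
    set (t := m / s).
    assert (ht : 0 <= t <= 1) by (unfold t; split; [apply div_ge0; lra| apply div_le1; unfold s; lra]).
    replace (l * fst A + m * fst B) with (s * ((1 - t) * fst A + t * fst B)) by (unfold t, s in *; field; lra).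
    replace (l * snd A + m * snd B) with (s * ((1 - t) * snd A + t * snd B)) by (unfold t, s in *; field; lra).
    rewrite FF_scale by auto.
    assert (C := FF_conv A B t ht).
    assert (Rpower s p <= s) by (apply Rpower_le_self; auto; unfold s; lra).
    assert (0 < Rpower s p) by (unfold Rpower; apply exp_pos).
    assert (0 <= FF ((1 - t) * fst A + t * fst B, (1 - t) * snd A + t * snd B)) by apply FF_ge0.
    assert (Rpower s p * FF ((1 - t) * fst A + t * fst B, (1 - t) * snd A + t * snd B) <= s * ((1 - t) * FF A + t * FF B)) by nra.
    replace (s * ((1 - t) * FF A + t * FF B)) with (l * FF A + m * FF B) in H3 by (unfold t, s in *; field; lra).
    lra.
Qed.

Lemma FF_comb_strict l m A B : 0 < l -> 0 < m -> l + m <= 1 -> A <> B -> FF A = 1 -> FF B = 1 ->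
  FF (l * fst A + m * fst B, l * snd A + m * snd B) < 1.
Proof.
  intros hl hm hlm hAB hA hB.
  set (s := l + m). assert (hs : 0 < s) by (unfold s; lra).
  set (t := m / s).
  assert (ht : 0 < t < 1) by (unfold t; split; [apply Rdiv_lt_0_compat; lra| apply div_lt1; unfold s; lra]).
  replace (l * fst A + m * fst B) with (s * ((1 - t) * fst A + t * fst B)) by (unfold t, s in *; field; lra).
  replace (l * snd A + m * snd B) with (s * ((1 - t) * snd A + t * snd B)) by (unfold t, s in *; field; lra).
  rewrite FF_scale by auto.
  assert (C := FF_conv_strict A B t ht hAB). rewrite hA, hB in C.
  assert (Rpower s p <= s) by (apply Rpower_le_self; auto; unfold s; lra).
  assert (0 < Rpower s p) by (unfold Rpower; apply exp_pos).
  set (X := FF ((1 - t) * fst A + t * fst B, (1 - t) * snd A + t * snd B)) in *.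
  assert (0 <= X) by apply FF_ge0.
  assert (s <= 1) by (unfold s; lra).
  assert (Rpower s p * X <= 1 * X) by (apply Rmult_le_compat_r; lra).
  lra.
Qed.

Lemma FF_cont x0 y0 eps : 0 < eps -> exists del, 0 < del /\
  forall x y, Rabs (x - x0) < del -> Rabs (y - y0) < del -> Rabs (FF (x, y) - FF (x0, y0)) < eps.
Proof.
  intro he.
  destruct (continuity_abspow p hp (x0 / a) (eps / 2) ltac:(lra)) as [d1 [hd1 H1]].
  destruct (continuity_abspow p hp (y0 / b) (eps / 2) ltac:(lra)) as [d2 [hd2 H2]].
  exists (Rmin (d1 * a) (d2 * b)). split. apply Rmin_pos; nra.
  intros x y hx hy. unfold FF; simpl.
  assert (hx' : Rabs (x / a - x0 / a) < d1).
  { replace (x / a - x0 / a) with ((x - x0) / a) by (field; lra). unfold Rdiv. rewrite Rabs_mult, Rabs_inv, (Rabs_pos_eq a) by lra.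
    assert (Rabs (x - x0) < d1 * a) by (eapply Rlt_le_trans; [exact hx| apply Rmin_l]).
    apply Rmult_lt_reg_r with a; auto. field_simplify; lra. }
  assert (hy' : Rabs (y / b - y0 / b) < d2).
  { replace (y / b - y0 / b) with ((y - y0) / b) by (field; lra). unfold Rdiv. rewrite Rabs_mult, Rabs_inv, (Rabs_pos_eq b) by lra.
    assert (Rabs (y - y0) < d2 * b) by (eapply Rlt_le_trans; [exact hy| apply Rmin_r]).
    apply Rmult_lt_reg_r with b; auto. field_simplify; lra. }
  assert (E1 : Rabs (abspow (x / a) p - abspow (x0 / a) p) < eps / 2).
  { destruct (Req_dec (x / a) (x0 / a)) as [E|E]. rewrite E, Rminus_diag, Rabs_R0; lra.
    apply (H1 (x / a)). split. split. exact I. auto. exact hx'. }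
  assert (E2 : Rabs (abspow (y / b) p - abspow (y0 / b) p) < eps / 2).
  { destruct (Req_dec (y / b) (y0 / b)) as [E|E]. rewrite E, Rminus_diag, Rabs_R0; lra.
    apply (H2 (y / b)). split. split. exact I. auto. exact hy'. }
  replace (abspow (x / a) p + abspow (y / b) p - (abspow (x0 / a) p + abspow (y0 / b) p))
    with ((abspow (x / a) p - abspow (x0 / a) p) + (abspow (y / b) p - abspow (y0 / b) p)) by ring.
  eapply Rle_lt_trans. apply Rabs_triang. lra.
Qed.

Lemma FF_line_cont x0 y0 dx dy : continuity (fun l => FF (x0 + l * dx, y0 + l * dy)).
Proof.
  intros l eps he.
  destruct (FF_cont (x0 + l * dx) (y0 + l * dy) eps he) as [d [hd H]].
  exists (d / (Rabs dx + Rabs dy + 1)).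
  assert (0 < Rabs dx + Rabs dy + 1) by (generalize (Rabs_pos dx) (Rabs_pos dy); lra).
  split. apply Rdiv_lt_0_compat; lra.
  intros l' [_ hl]. simpl in hl. unfold R_dist in hl. simpl. unfold R_dist.
  apply H.
  - replace (x0 + l' * dx - (x0 + l * dx)) with ((l' - l) * dx) by ring. rewrite Rabs_mult.
    assert (Rabs (l' - l) * (Rabs dx + Rabs dy + 1) < d).
    { apply Rmult_lt_reg_r with (/ (Rabs dx + Rabs dy + 1)). apply Rinv_0_lt_compat; lra.
      rewrite Rmult_assoc, Rinv_r by lra. lra. }
    generalize (Rabs_pos dx) (Rabs_pos dy) (Rabs_pos (l' - l)). nra.
  - replace (y0 + l' * dy - (y0 + l * dy)) with ((l' - l) * dy) by ring. rewrite Rabs_mult.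
    assert (Rabs (l' - l) * (Rabs dx + Rabs dy + 1) < d).
    { apply Rmult_lt_reg_r with (/ (Rabs dx + Rabs dy + 1)). apply Rinv_0_lt_compat; lra.
      rewrite Rmult_assoc, Rinv_r by lra. lra. }
    generalize (Rabs_pos dx) (Rabs_pos dy) (Rabs_pos (l' - l)). nra.
Qed.

End Fsec.

End B.
Import B.

Module C.
Open Scope R_scope.
Set Default Proof Using "All".

Definition cr (u v : R * R) : R := fst u * snd v - snd u * fst v.
Definition dot (u v : R * R) : R := fst u * fst v + snd u * snd v.
Definition vsub (u v : R * R) : R * R := (fst u - fst v, snd u - snd v).
Definition lc (l m : R) (A B : R * R) : R * R := (l * fst A + m * fst B, l * snd A + m * snd B).
Definition sqd (x y : R * R) : R := (fst x - fst y) ^ 2 + (snd x - snd y) ^ 2.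
Definition ang (m t : nat) : R := 2 * INR t * PI / INR m.

Lemma nat_floor (N : nat) (x : R) : 0 <= x < INR N -> exists n, (n < N)%nat /\ INR n <= x < INR n + 1.
Proof.
  induction N as [|N IH]; intros [h1 h2].
  - simpl in h2; lra.
  - rewrite S_INR in h2. destruct (Rlt_le_dec x (INR N)).
    + destruct (IH (conj h1 r)) as [n [hn hx]]. exists n; split; [lia| auto].
    + exists N; split; [lia| lra].
Qed.

Lemma polar (x y : R) : (x, y) <> (0, 0) ->
  exists th r, 0 <= th < 2 * PI /\ 0 < r /\ x = r * cos th /\ y = r * sin th.
Proof.
  intro H.
  assert (hr2 : 0 < x ^ 2 + y ^ 2).
  { destruct (Req_dec x 0); destruct (Req_dec y 0); subst; try congruence; nra. }
  set (r := sqrt (x ^ 2 + y ^ 2)).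
  assert (hr : 0 < r) by (apply sqrt_lt_R0; auto).
  assert (hrr : r * r = x ^ 2 + y ^ 2) by (apply sqrt_sqrt; lra).
  set (c := x / r).
  assert (hc : -1 <= c <= 1).
  { unfold c. assert ((x / r) ^ 2 <= 1).
    { replace ((x / r) ^ 2) with (x ^ 2 / (r * r)) by (field; lra). apply div_le1; nra. }
    nra. }
  assert (Hs : sqrt (1 - c²) = Rabs y / r).
  { unfold c. replace (1 - (x / r)²) with ((Rabs y / r) ^ 2).
    - rewrite <- Rsqr_pow2, sqrt_Rsqr; auto. apply div_ge0; auto. apply Rabs_pos.
    - replace ((Rabs y / r) ^ 2) with (Rabs y ^ 2 / (r * r)) by (field; lra).
      rewrite pow2_abs. unfold Rsqr. field_simplify_eq; [ | lra]. nra. }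
  generalize (acos_bound c); intro hb.
  assert (PI_pos := PI_RGT_0).
  destruct (Rle_lt_dec 0 y) as [hy|hy].
  - exists (acos c), r. split; [lra|]. split; auto.
    rewrite cos_acos by auto. rewrite sin_acos by auto. rewrite Hs, Rabs_pos_eq by auto.
    unfold c; split; field; lra.
  - assert (Hsy : sin (acos c) = - y / r) by (rewrite sin_acos, Hs, Rabs_left by auto; auto).
    assert (0 < acos c).
    { destruct (Req_dec (acos c) 0) as [E|E]; [|lra]. rewrite E, sin_0 in Hsy.
      assert (y = 0). { apply Rmult_eq_reg_r with (/ r). unfold Rdiv in Hsy. lra. apply Rinv_neq_0_compat; lra. } lra. }
    exists (2 * PI - acos c), r. split; [lra|]. split; auto.
    rewrite cos_minus, sin_minus, cos_2PI, sin_2PI, cos_acos by auto. rewrite Hsy.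
    unfold c; split; field; lra.
Qed.

Definition Nn (a b p th : R) : R := pnorm a b p (cos th, sin th).
Definition gam (a b p th : R) : R * R := phi a b p (cos th, sin th).

Lemma cs_nz th : (cos th, sin th) <> (0, 0).
Proof. intro H. injection H; intros. apply (cos_sin_0 th). auto. Qed.

Lemma gam_eq a b p th : gam a b p th = (cos th / Nn a b p th, sin th / Nn a b p th).
Proof. reflexivity. Qed.

Lemma vertex_gam a b p m t : vertex a b p m t = gam a b p (ang m t).
Proof. reflexivity. Qed.

Lemma gam_shift a b p th (k : nat) : gam a b p (th + 2 * INR k * PI) = gam a b p th.
Proof. unfold gam. rewrite sin_period, cos_period. reflexivity. Qed.

Lemma gam_ext a b p th th' : th = th' -> gam a b p th = gam a b p th'.
Proof. intros; subst; auto. Qed.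

Lemma vertex_period a b p m t : (0 < m)%nat -> vertex a b p m (t + m) = vertex a b p m t.
Proof.
  intro hm. rewrite !vertex_gam. unfold ang.
  rewrite <- (gam_shift a b p (2 * INR t * PI / INR m) 1).
  apply gam_ext. rewrite plus_INR. simpl INR. field. apply not_0_INR. lia.
Qed.

Lemma vertex_double a b p m t : (0 < m)%nat -> vertex a b p (2 * m) (2 * t) = vertex a b p m t.
Proof.
  intro hm. rewrite !vertex_gam. apply gam_ext. unfold ang. rewrite !mult_INR. simpl INR.
  field. apply not_0_INR. lia.
Qed.

Lemma sector_decomp al be th : 0 < be - al < PI -> al <= th <= be ->
  cos th = (sin (be - th) * cos al + sin (th - al) * cos be) / sin (be - al) /\
  sin th = (sin (be - th) * sin al + sin (th - al) * sin be) / sin (be - al).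
Proof.
  intros h1 h2.
  assert (0 < sin (be - al)) by (apply sin_gt_0; lra).
  rewrite !sin_minus.
  assert (E: sin (be - al) = sin be * cos al - cos be * sin al) by apply sin_minus.
  rewrite <- E.
  split; apply Rmult_eq_reg_r with (sin (be - al)); try lra; unfold Rdiv; rewrite Rmult_assoc, Rinv_l by lra;
    rewrite E; rewrite Rmult_1_r; generalize (sin2_cos2 th) (sin2_cos2 al) (sin2_cos2 be); unfold Rsqr; intros; nra.
Qed.


Section Gsec.
Variables a b p : R.
Hypothesis ha : 0 < a.
Hypothesis hb : 0 < b.
Hypothesis hp : 1 < p.



Lemma Nn_pos th : 0 < Nn a b p th.
Proof. apply pnorm_pos; auto. apply cs_nz. Qed.


Lemma FF_gam th : FF a b p (gam a b p th) = 1.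
Proof. apply FF_phi; auto. apply cs_nz. Qed.


Lemma cr_gam al be : cr (gam a b p al) (gam a b p be) = sin (be - al) / (Nn a b p al * Nn a b p be).
Proof.
  rewrite !gam_eq. unfold cr; simpl. rewrite sin_minus.
  generalize (Nn_pos al) (Nn_pos be); intros. field. lra.
Qed.





End Gsec.

Lemma sqd_ge0 x y : 0 <= sqd x y.
Proof. unfold sqd. apply Rplus_le_le_0_compat; apply pow2_ge_0. Qed.

End C.
Import C.

Module D.
Open Scope R_scope.
Set Default Proof Using "All".

Lemma lc_cr_l l m X Y : cr X (lc l m X Y) = m * cr X Y.
Proof. unfold cr, lc; simpl; ring. Qed.
Lemma lc_cr_r l m X Y : cr (lc l m X Y) Y = l * cr X Y.
Proof. unfold cr, lc; simpl; ring. Qed.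

Lemma index_lemma (m j s : nat) : (3 <= m)%nat -> (j < 2 * m)%nat -> (s < m)%nat ->
  0 <= sin (PI * (INR j - 2 * INR s) / INR m) ->
  0 <= sin (PI * (2 * INR s + 2 - INR j) / INR m) ->
  j = (2 * s)%nat \/ j = (2 * s + 1)%nat \/ j = (2 * s + 2)%nat \/ (j = 0%nat /\ s = (m - 1)%nat).
Proof.
  intros hm hj hs H1 H2.
  assert (PI_pos := PI_RGT_0).
  assert (HM : 3 <= INR m) by (replace 3 with (INR 3) by (simpl; ring); apply le_INR; auto).
  assert (hj' : INR j + 1 <= 2 * INR m) by (rewrite <- S_INR; replace 2 with (INR 2) by (simpl; ring); rewrite <- mult_INR; apply le_INR; lia).
  assert (hs' : INR s + 1 <= INR m) by (rewrite <- S_INR; apply le_INR; lia).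
  assert (hj0 : 0 <= INR j) by apply pos_INR.
  assert (hs0 : 0 <= INR s) by apply pos_INR.
  destruct (le_lt_dec (2 * s) j) as [c1|c1].
  - destruct (le_lt_dec j (2 * s + 2)) as [c2|c2]. lia.
    destruct (le_lt_dec j (2 * s + m)) as [c3|c3].
    + exfalso. assert (INR j >= 2 * INR s + 3).
      { replace 3 with (INR 3) by (simpl; ring). replace 2 with (INR 2) by (simpl; ring).
        rewrite <- mult_INR, <- plus_INR. apply Rle_ge, le_INR. lia. }
      assert (INR j <= 2 * INR s + INR m).
      { replace 2 with (INR 2) by (simpl; ring). rewrite <- mult_INR, <- plus_INR. apply le_INR. lia. }
      assert (sin (PI * (2 * INR s + 2 - INR j) / INR m) < 0).
      { apply sin_lt_0_var.
        - apply Rmult_lt_reg_r with (INR m). lra. unfold Rdiv. rewrite Rmult_assoc, Rinv_l by lra. nra.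
        - apply Rmult_lt_reg_r with (INR m). lra. unfold Rdiv. rewrite Rmult_assoc, Rinv_l by lra. nra. }
      lra.
    + exfalso. assert (INR j >= 2 * INR s + INR m + 1).
      { replace 2 with (INR 2) by (simpl; ring). rewrite <- mult_INR, <- plus_INR, <- S_INR.
        apply Rle_ge, le_INR. lia. }
      assert (sin (PI * (INR j - 2 * INR s) / INR m) < 0).
      { apply sin_lt_0.
        - apply Rmult_lt_reg_r with (INR m). lra. unfold Rdiv. rewrite Rmult_assoc, Rinv_l by lra. nra.
        - apply Rmult_lt_reg_r with (INR m). lra. unfold Rdiv. rewrite Rmult_assoc, Rinv_l by lra. nra. }
      lra.
  - assert (INR j + 1 <= 2 * INR s).
    { rewrite <- S_INR. replace 2 with (INR 2) by (simpl; ring). rewrite <- mult_INR. apply le_INR. lia. }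
    destruct (le_lt_dec (j + m) (2 * s)) as [c3|c3].
    + assert (INR j + INR m <= 2 * INR s).
      { rewrite <- plus_INR. replace 2 with (INR 2) by (simpl; ring). rewrite <- mult_INR. apply le_INR. lia. }
      destruct (Nat.eq_dec (2 * s + 2) (j + 2 * m)) as [e|e].
      * right; right; right. lia.
      * exfalso. assert (2 * INR s + 2 + 1 <= INR j + 2 * INR m).
        { replace 2 with (INR 2) by (simpl; ring). rewrite <- !mult_INR, <- !plus_INR.
          replace (INR (2 * s + 2) + 1) with (INR (S (2 * s + 2))) by (rewrite S_INR; auto). apply le_INR. lia. }
        assert (sin (PI * (2 * INR s + 2 - INR j) / INR m) < 0).
        { apply sin_lt_0.
          - apply Rmult_lt_reg_r with (INR m). lra. unfold Rdiv. rewrite Rmult_assoc, Rinv_l by lra. nra.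
          - apply Rmult_lt_reg_r with (INR m). lra. unfold Rdiv. rewrite Rmult_assoc, Rinv_l by lra. nra. }
        lra.
    + exfalso. assert (2 * INR s + 1 <= INR j + INR m).
      { rewrite <- plus_INR. replace 2 with (INR 2) by (simpl; ring). rewrite <- mult_INR, <- S_INR. apply le_INR. lia. }
      assert (sin (PI * (INR j - 2 * INR s) / INR m) < 0).
      { apply sin_lt_0_var.
        - apply Rmult_lt_reg_r with (INR m). lra. unfold Rdiv. rewrite Rmult_assoc, Rinv_l by lra. nra.
        - apply Rmult_lt_reg_r with (INR m). lra. unfold Rdiv. rewrite Rmult_assoc, Rinv_l by lra. nra. }
      lra.
Qed.

Section Dsec.
Variables a b p : R.
Hypothesis ha : 0 < a.
Hypothesis hb : 0 < b.
Hypothesis hp : 1 < p.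

Notation V := (vertex a b p).
Notation F := (FF a b p).

Lemma INR_m_pos (m : nat) : (3 <= m)%nat -> 3 <= INR m.
Proof. intro. replace 3 with (INR 3) by (simpl; ring). apply le_INR; auto. Qed.

Lemma cr_V m s : (3 <= m)%nat -> 0 < cr (V m s) (V m (S s)).
Proof.
  intro hm. rewrite !vertex_gam, cr_gam by auto.
  assert (HM := INR_m_pos m hm). assert (PI_pos := PI_RGT_0).
  apply Rdiv_lt_0_compat.
  - unfold ang; rewrite S_INR.
    replace (2 * (INR s + 1) * PI / INR m - 2 * INR s * PI / INR m) with (2 * PI / INR m) by (field; lra).
    apply sin_gt_0.
    + apply Rdiv_lt_0_compat; lra.
    + apply Rmult_lt_reg_r with (INR m). lra. unfold Rdiv. rewrite Rmult_assoc, Rinv_l by lra. nra.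
  - generalize (Nn_pos a b p ha hb hp (ang m s)) (Nn_pos a b p ha hb hp (ang m (S s))). nra.
Qed.

Lemma sector (m : nat) (z : R * R) : (3 <= m)%nat -> z <> (0, 0) ->
  exists s l mu, (s < m)%nat /\ 0 <= l /\ 0 <= mu /\ z = lc l mu (V m s) (V m (S s)).
Proof.
  intros hm hz. destruct z as [x y].
  destruct (polar x y hz) as [th [r [hth [hr [hx hy]]]]].
  assert (HM := INR_m_pos m hm). assert (PI_pos := PI_RGT_0).
  destruct (nat_floor m (th * INR m / (2 * PI))) as [s [hs [h1 h2]]].
  { split. apply div_ge0; [apply Rmult_le_pos; lra| lra]. apply Rmult_lt_reg_r with (2 * PI). lra. field_simplify; [|lra]. nra. }
  set (al := ang m s). set (be := ang m (S s)).
  assert (hal : al <= th).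
  { unfold al, ang. apply Rmult_le_reg_r with (INR m). lra. field_simplify. 2: lra.
    apply Rmult_le_reg_r with (/ (2 * PI)). apply Rinv_0_lt_compat; lra.
    replace (2 * INR s * PI * / (2 * PI)) with (INR s) by (field; lra).
    replace (th * INR m * / (2 * PI)) with (th * INR m / (2 * PI)) by (field; lra). lra. }
  assert (hbe : th <= be).
  { unfold be, ang. rewrite S_INR. apply Rmult_le_reg_r with (INR m). lra. field_simplify. 2: lra.
    apply Rmult_le_reg_r with (/ (2 * PI)). apply Rinv_0_lt_compat; lra.
    replace ((2 * INR s * PI + 2 * PI) * / (2 * PI)) with (INR s + 1) by (field; lra).
    replace (th * INR m * / (2 * PI)) with (th * INR m / (2 * PI)) by (field; lra). lra. }
  assert (hd : 0 < be - al < PI).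
  { unfold be, al, ang. rewrite S_INR.
    replace (2 * (INR s + 1) * PI / INR m - 2 * INR s * PI / INR m) with (2 * PI / INR m) by (field; lra).
    split. apply Rdiv_lt_0_compat; lra. apply Rmult_lt_reg_r with (INR m). lra. unfold Rdiv. rewrite Rmult_assoc, Rinv_l by lra. nra. }
  destruct (sector_decomp al be th hd (conj hal hbe)) as [Ec Es].
  assert (hS : 0 < sin (be - al)) by (apply sin_gt_0; lra).
  assert (hA : 0 <= sin (be - th)) by (apply sin_ge_0; lra).
  assert (hB : 0 <= sin (th - al)) by (apply sin_ge_0; lra).
  generalize (Nn_pos a b p ha hb hp al) (Nn_pos a b p ha hb hp be); intros hNa hNb.
  exists s, (r * sin (be - th) * Nn a b p al / sin (be - al)), (r * sin (th - al) * Nn a b p be / sin (be - al)).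
  split; auto. split. apply div_ge0; auto. apply Rmult_le_pos; auto. apply Rmult_le_pos; lra. lra.
  split. apply div_ge0; auto. apply Rmult_le_pos; auto. apply Rmult_le_pos; lra. lra.
  rewrite !vertex_gam. fold al be. rewrite !gam_eq. unfold lc; simpl.
  rewrite hx, hy, Ec, Es. f_equal; field; repeat split; lra.

Qed.

Definition left (m s : nat) (z : R * R) : R := cr (vsub (V m (S s)) (V m s)) (vsub z (V m s)).
Definition inQ (m : nat) (z : R * R) : Prop := forall s, (s < m)%nat -> 0 <= left m s z.

Lemma left_O m s : left m s (0, 0) = cr (V m s) (V m (S s)).
Proof. unfold left, cr, vsub; simpl; ring. Qed.

Lemma left_lc m s l mu : left m s (lc l mu (V m s) (V m (S s))) = (1 - l - mu) * cr (V m s) (V m (S s)).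
Proof. unfold left, cr, vsub, lc; simpl; ring. Qed.

Lemma Q_sub_D m z : (3 <= m)%nat -> inQ m z -> F z <= 1.
Proof.
  intros hm hq. destruct z as [x y].
  assert (H0 : (x,y) = (0,0) \/ (x,y) <> (0,0)).
  { destruct (Req_dec x 0); destruct (Req_dec y 0); [left; subst; auto | right; intro E; injection E; lra ..]. }
  destruct H0 as [E|hz]. rewrite E, FF_0; lra.
  destruct (sector m (x,y) hm hz) as [s [l [mu [hs [hl [hmu Ez]]]]]].
  assert (hc := cr_V m s hm). assert (H1 := hq s hs). rewrite Ez, left_lc in H1.
  assert (l + mu <= 1) by (destruct (Rle_dec (l + mu) 1); auto; exfalso; nra).
  rewrite Ez. unfold lc. eapply Rle_trans. apply FF_comb; auto. rewrite !vertex_gam, !FF_gam; auto. lra.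
Qed.

End Dsec.

End D.
Import D.

Module E.
Open Scope R_scope.
Set Default Proof Using "All".

Lemma line_decomp X Y q : X <> Y -> cr (vsub Y X) (vsub q X) = 0 ->
  exists nu, q = lc (1 - nu) nu X Y.
Proof.
  destruct X as [x1 x2], Y as [y1 y2], q as [q1 q2]. unfold cr, vsub, lc; simpl. intros hXY hc.
  assert (hd : 0 < (y1 - x1) ^ 2 + (y2 - x2) ^ 2).
  { destruct (Req_dec y1 x1); destruct (Req_dec y2 x2); [subst; congruence| nra ..]. }
  set (D := (y1 - x1) ^ 2 + (y2 - x2) ^ 2) in *.
  exists (((q1 - x1) * (y1 - x1) + (q2 - x2) * (y2 - x2)) / D).
  assert (hc1 : ((y1 - x1) * (q2 - x2) - (y2 - x2) * (q1 - x1)) * (y2 - x2) = 0) by (rewrite hc; ring).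
  assert (hc2 : ((y1 - x1) * (q2 - x2) - (y2 - x2) * (q1 - x1)) * (y1 - x1) = 0) by (rewrite hc; ring).
  f_equal.
  - apply Rmult_eq_reg_r with D; [|lra]. field_simplify; [unfold D; lra| lra].
  - apply Rmult_eq_reg_r with D; [|lra]. field_simplify; [unfold D; lra| lra].
Qed.

Section Esec.
Variables a b p : R.
Hypothesis ha : 0 < a.
Hypothesis hb : 0 < b.
Hypothesis hp : 1 < p.

Notation V := (vertex a b p).
Notation F := (FF a b p).

Lemma chord_strict X Y z : F X = 1 -> F Y = 1 -> F z = 1 -> 0 < cr X Y ->
  (forall l mu, 0 <= l -> 0 <= mu -> z <> lc l mu X Y) -> 0 < cr (vsub Y X) (vsub z X).
Proof.
  intros hX hY hz hc hnot.
  destruct (Rlt_le_dec 0 (cr (vsub Y X) (vsub z X))) as [H|H]; auto. exfalso.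
  set (c := cr X Y) in *. set (L := cr (vsub Y X) (vsub z X)) in *.
  assert (EL : cr (vsub Y X) z = L - c) by (unfold L, c, cr, vsub; simpl; ring).
  set (k := c / (c - L)).
  assert (hk : 0 < k <= 1) by (unfold k; split; [apply Rdiv_lt_0_compat; lra| apply div_le1; lra]).
  set (q := (k * fst z, k * snd z)).
  assert (hXY : X <> Y) by (intro E; subst; unfold c, cr in hc; lra).
  assert (hq : cr (vsub Y X) (vsub q X) = 0).
  { replace (cr (vsub Y X) (vsub q X)) with (k * cr (vsub Y X) z + c) by (unfold q, c, cr, vsub; simpl; ring).
    rewrite EL. unfold k. field. lra. }
  destruct (line_decomp X Y q hXY hq) as [nu Enu].
  assert (Hz : z = (/ k * fst q, / k * snd q)) by (unfold q; destruct z; simpl; f_equal; field; lra).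
  destruct (Rle_lt_dec 0 nu) as [h0|h0].
  - destruct (Rle_lt_dec nu 1) as [h1|h1].
    + apply (hnot ((1 - nu) / k) (nu / k)). apply div_ge0; lra. apply div_ge0; lra.
      rewrite Hz, Enu. unfold lc; simpl. f_equal; field; lra.
    + (* Y between X and q *)
      assert (hXz : X <> z).
      { intro E. apply (hnot 1 0); try lra. rewrite <- E. unfold lc. destruct X; simpl; f_equal; ring. }
      assert (EY : Y = lc (1 - / nu) (k / nu) X z).
      { assert (Eq1 : fst q = (1 - nu) * fst X + nu * fst Y) by (rewrite Enu; reflexivity).
        assert (Eq2 : snd q = (1 - nu) * snd X + nu * snd Y) by (rewrite Enu; reflexivity).
        unfold q in Eq1, Eq2; simpl in Eq1, Eq2. unfold lc. destruct Y as [y1 y2]; simpl in *. f_equal.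
        - apply Rmult_eq_reg_l with nu; [|lra]. field_simplify; [|lra]. lra.
        - apply Rmult_eq_reg_l with nu; [|lra]. field_simplify; [|lra]. lra. }
      assert (F Y < 1).
      { rewrite EY. unfold lc. apply FF_comb_strict; auto.
        assert (/ nu < 1) by (rewrite <- Rinv_1; apply Rinv_lt_contravar; lra).
        assert (0 < / nu) by (apply Rinv_0_lt_compat; lra). lra.
        apply Rdiv_lt_0_compat; lra.
        unfold Rdiv. assert (k * / nu <= / nu) by (assert (0 < / nu) by (apply Rinv_0_lt_compat; lra); nra). lra. }
      lra.
  - assert (hzY : z <> Y).
    { intro E. apply (hnot 0 1); try lra. rewrite E. unfold lc. destruct Y; simpl; f_equal; ring. }
    assert (EX : X = lc (k / (1 - nu)) (- nu / (1 - nu)) z Y).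
    { assert (Eq1 : fst q = (1 - nu) * fst X + nu * fst Y) by (rewrite Enu; reflexivity).
      assert (Eq2 : snd q = (1 - nu) * snd X + nu * snd Y) by (rewrite Enu; reflexivity).
      unfold q in Eq1, Eq2; simpl in Eq1, Eq2. unfold lc. destruct X as [x1 x2]; simpl in *. f_equal.
      - apply Rmult_eq_reg_l with (1 - nu); [|lra]. field_simplify; [|lra]. lra.
      - apply Rmult_eq_reg_l with (1 - nu); [|lra]. field_simplify; [|lra]. lra. }
    assert (F X < 1).
    { rewrite EX. unfold lc. apply FF_comb_strict; auto.
      apply Rdiv_lt_0_compat; lra. apply Rdiv_lt_0_compat; lra.
      replace (k / (1 - nu) + - nu / (1 - nu)) with ((k - nu) / (1 - nu)) by (field; lra).
      apply div_le1; lra. }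
    lra.
Qed.

Lemma gam_decomp al be th : 0 < be - al < PI -> al <= th <= be ->
  gam a b p th = lc (sin (be - th) * Nn a b p al / (sin (be - al) * Nn a b p th))
                    (sin (th - al) * Nn a b p be / (sin (be - al) * Nn a b p th))
                    (gam a b p al) (gam a b p be).
Proof.
  intros h1 h2.
  destruct (sector_decomp al be th h1 h2) as [Ec Es].
  assert (0 < sin (be - al)) by (apply sin_gt_0; lra).
  generalize (Nn_pos a b p ha hb hp al) (Nn_pos a b p ha hb hp be) (Nn_pos a b p ha hb hp th); intros.
  rewrite !gam_eq. unfold lc; simpl. rewrite Ec, Es at 1. f_equal; field; lra.
Qed.

End Esec.

End E.
Import E.

Module F.
Open Scope R_scope.
Set Default Proof Using "All".

Lemma INRm3 (m : nat) : (3 <= m)%nat -> 3 <= INR m.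
Proof. intro. replace 3 with (INR 3) by (simpl; ring). apply le_INR; auto. Qed.

Section Fsec2.
Variables a b p : R.
Hypothesis ha : 0 < a.
Hypothesis hb : 0 < b.
Hypothesis hp : 1 < p.

Notation V := (vertex a b p).
Notation F := (FF a b p).
Notation left := (left a b p).
Notation inQ := (inQ a b p).
Definition Qv (m j : nat) := vertex a b p (2 * m) j.

Lemma F_V m t : F (V m t) = 1.
Proof. rewrite vertex_gam. apply FF_gam; auto. Qed.

Lemma sin_of_cr al th : 0 <= cr (gam a b p al) (gam a b p th) -> 0 <= sin (th - al).
Proof.
  rewrite cr_gam by auto. intro H.
  generalize (Nn_pos a b p ha hb hp al) (Nn_pos a b p ha hb hp th); intros.
  assert (0 < Nn a b p al * Nn a b p th) by nra.
  replace (sin (th - al)) with (sin (th - al) / (Nn a b p al * Nn a b p th) * (Nn a b p al * Nn a b p th)) by (field; lra).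
  nra.
Qed.

Lemma index_of_sector m j s l mu : (3 <= m)%nat -> (j < 2 * m)%nat -> (s < m)%nat -> 0 <= l -> 0 <= mu ->
  Qv m j = lc l mu (V m s) (V m (S s)) ->
  j = (2 * s)%nat \/ j = (2 * s + 1)%nat \/ j = (2 * s + 2)%nat \/ (j = 0%nat /\ s = (m - 1)%nat).
Proof.
  intros hm hj hs hl hmu E.
  assert (hc := cr_V a b p ha hb hp m s hm).
  assert (c1 : 0 <= cr (V m s) (Qv m j)) by (rewrite E, lc_cr_l; nra).
  assert (c2 : 0 <= cr (Qv m j) (V m (S s))) by (rewrite E, lc_cr_r; nra).
  unfold Qv in *. rewrite !vertex_gam in c1, c2.
  apply sin_of_cr in c1. apply sin_of_cr in c2.
  assert (HM : 3 <= INR m) by (apply INRm3; auto).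
  apply (index_lemma m j s hm hj hs).
  - replace (PI * (INR j - 2 * INR s) / INR m) with (ang (2 * m) j - ang m s); auto.
    unfold ang. rewrite mult_INR. simpl INR. field. lra.
  - replace (PI * (2 * INR s + 2 - INR j) / INR m) with (ang m (S s) - ang (2 * m) j); auto.
    unfold ang. rewrite mult_INR, S_INR. simpl INR. field. lra.
Qed.

Lemma left_self1 m s : left m s (V m s) = 0.
Proof. unfold D.left, cr, vsub; simpl; ring. Qed.
Lemma left_self2 m s : left m s (V m (S s)) = 0.
Proof. unfold D.left, cr, vsub; simpl; ring. Qed.

Lemma Qv_even m t : (0 < m)%nat -> Qv m (2 * t) = V m t.
Proof. intro. unfold Qv. apply vertex_double; auto. Qed.

Lemma V_m m : (0 < m)%nat -> V m m = V m 0.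
Proof. intro. replace m with (0 + m)%nat at 2 by lia. apply vertex_period; auto. Qed.

Lemma Qv_2m m : (0 < m)%nat -> Qv m (2 * m) = Qv m 0.
Proof. intro. unfold Qv. replace (2 * m)%nat with (0 + 2 * m)%nat at 2 by lia. apply vertex_period; lia. Qed.

Lemma left_Qv_nonneg m t j : (3 <= m)%nat -> (t < m)%nat -> (j < 2 * m)%nat -> j <> (2 * t + 1)%nat ->
  0 <= left m t (Qv m j).
Proof.
  intros hm ht hj hj1.
  destruct (Classical_Prop.classic (exists l mu, 0 <= l /\ 0 <= mu /\ Qv m j = lc l mu (V m t) (V m (S t)))) as [[l [mu [hl [hmu E]]]]|N].
  - destruct (index_of_sector m j t l mu hm hj ht hl hmu E) as [e|[e|[e|[e1 e2]]]].
    + subst. rewrite Qv_even by lia. rewrite left_self1. lra.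
    + lia.
    + subst. replace (2 * t + 2)%nat with (2 * S t)%nat by lia. rewrite Qv_even by lia. rewrite left_self2. lra.
    + subst. replace (S (m - 1)) with m by lia. replace 0%nat with (2 * 0)%nat by lia. rewrite Qv_even by lia.
      assert (E0 : V m 0 = V m (S (m - 1))) by (replace (S (m - 1)) with m by lia; rewrite V_m; auto; lia).
      rewrite E0, left_self2. lra.
  - left. unfold D.left. apply (chord_strict a b p ha hb hp); auto. apply F_V. apply F_V. unfold Qv; apply F_V.
    apply cr_V; auto. intros l mu hl hmu E. apply N. exists l, mu. auto.
Qed.

Lemma left_V_strict m s j : (3 <= m)%nat -> (s < m)%nat -> (j < m)%nat -> j <> s -> j <> S s -> (j + m <> S s)%nat ->
  0 < left m s (V m j).
Proof.
  intros hm hs hj h1 h2 h3. unfold D.left. apply (chord_strict a b p ha hb hp); auto. apply F_V. apply F_V. apply F_V.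
  apply cr_V; auto. intros l mu hl hmu E. rewrite <- Qv_even in E by lia.
  destruct (index_of_sector m (2 * j) s l mu hm ltac:(lia) hs hl hmu E) as [e|[e|[e|[e1 e2]]]]; lia.
Qed.

Lemma left_V_nonneg m s j : (3 <= m)%nat -> (s < m)%nat -> (j <= m)%nat -> 0 <= left m s (V m j).
Proof.
  intros hm hs hj.
  destruct (Nat.eq_dec j m). subst. rewrite V_m by lia. rewrite <- Qv_even by lia. apply left_Qv_nonneg; lia.
  rewrite <- Qv_even by lia. apply left_Qv_nonneg; lia.
Qed.

Lemma left_affine m s A B sg : left m s (lc (1 - sg) sg A B) = (1 - sg) * left m s A + sg * left m s B.
Proof. unfold D.left, cr, vsub, lc; simpl; ring. Qed.

Lemma inQ_conv m A B sg : inQ m A -> inQ m B -> 0 <= sg <= 1 -> inQ m (lc (1 - sg) sg A B).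
Proof.
  intros hA hB hs s hsm. rewrite left_affine. generalize (hA s hsm) (hB s hsm). nra.
Qed.

Lemma inQ_V m j : (3 <= m)%nat -> (j <= m)%nat -> inQ m (V m j).
Proof. intros hm hj s hs. apply left_V_nonneg; auto. Qed.

Lemma seg_lc A B z : seg A B z <-> exists sg, 0 <= sg <= 1 /\ z = lc (1 - sg) sg A B.
Proof. unfold seg, lc. tauto. Qed.

Lemma polygon_inQ m z : (3 <= m)%nat -> polygon a b p m z -> inQ m z.
Proof.
  intros hm [t [ht hz]]. apply seg_lc in hz. destruct hz as [sg [hsg E]]. subst.
  apply inQ_conv; auto; apply inQ_V; lia.
Qed.

Lemma inQ_O m : (3 <= m)%nat -> inQ m (0, 0).
Proof. intros hm s hs. rewrite left_O; auto. left. apply cr_V; auto. Qed.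

Lemma odd_outside m t : (3 <= m)%nat -> (t < m)%nat -> left m t (Qv m (2 * t + 1)) < 0.
Proof.
  intros hm ht.
  assert (HM : 3 <= INR m) by (apply INRm3; auto). assert (PI_pos := PI_RGT_0).
  set (al := ang m t). set (be := ang m (S t)). set (th := ang (2 * m) (2 * t + 1)).
  assert (Ebe : be - al = 2 * PI / INR m) by (unfold be, al, ang; rewrite S_INR; field; lra).
  assert (Eth1 : th - al = PI / INR m) by (unfold th, al, ang; rewrite plus_INR, !mult_INR; simpl INR; field; lra).
  assert (Eth2 : be - th = PI / INR m) by (unfold th, be, ang; rewrite S_INR, plus_INR, !mult_INR; simpl INR; field; lra).
  assert (hd : 0 < be - al < PI).
  { rewrite Ebe. split. apply Rdiv_lt_0_compat; lra.
    apply Rmult_lt_reg_r with (INR m). lra. unfold Rdiv. rewrite Rmult_assoc, Rinv_l by lra. nra. }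
  assert (hpm : 0 < PI / INR m < PI).
  { split. apply Rdiv_lt_0_compat; lra.
    apply Rmult_lt_reg_r with (INR m). lra. unfold Rdiv. rewrite Rmult_assoc, Rinv_l by lra. nra. }
  assert (E := gam_decomp a b p ha hb hp al be th hd ltac:(lra)).
  rewrite Eth1, Eth2 in E.
  set (l := sin (PI / INR m) * Nn a b p al / (sin (be - al) * Nn a b p th)) in E.
  set (mu := sin (PI / INR m) * Nn a b p be / (sin (be - al) * Nn a b p th)) in E.
  assert (hS : 0 < sin (be - al)) by (apply sin_gt_0; lra).
  assert (hS2 : 0 < sin (PI / INR m)) by (apply sin_gt_0; lra).
  generalize (Nn_pos a b p ha hb hp al) (Nn_pos a b p ha hb hp be) (Nn_pos a b p ha hb hp th); intros.
  assert (hl : 0 < l) by (unfold l; apply Rdiv_lt_0_compat; apply Rmult_lt_0_compat; auto).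
  assert (hmu : 0 < mu) by (unfold mu; apply Rdiv_lt_0_compat; apply Rmult_lt_0_compat; auto).
  assert (EQ : Qv m (2 * t + 1) = lc l mu (V m t) (V m (S t))) by (unfold Qv; rewrite !vertex_gam; exact E).
  assert (hc := cr_V a b p ha hb hp m t hm).
  assert (hne : V m t <> V m (S t)) by (intro H'; rewrite H' in hc; unfold cr in hc; lra).
  assert (1 < l + mu).
  { destruct (Rlt_le_dec 1 (l + mu)); auto. exfalso.
    assert (F (Qv m (2 * t + 1)) < 1) by (rewrite EQ; unfold lc; apply FF_comb_strict; auto; apply F_V).
    unfold Qv in H2. rewrite F_V in H2. lra. }
  rewrite EQ. rewrite left_lc; auto. nra.
Qed.

Lemma line_Q_edge m s r : (3 <= m)%nat -> (s < m)%nat -> inQ m r -> left m s r = 0 ->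
  seg (V m s) (V m (S s)) r.
Proof.
  intros hm hs hq hl.
  assert (hc := cr_V a b p ha hb hp m s hm).
  assert (hne : V m s <> V m (S s)) by (intro H'; rewrite H' in hc; unfold cr in hc; lra).
  destruct (line_decomp _ _ r hne hl) as [nu Enu].
  apply seg_lc. exists nu. split; auto.
  destruct (Rle_lt_dec 0 nu) as [h0|h0]; [destruct (Rle_lt_dec nu 1) as [h1|h1]|]; [lra| exfalso..].
  - (* beyond V(s+1): use edge s+1 *)
    destruct (Nat.eq_dec (S s) m) as [e|e].
    + assert (H := hq 0%nat ltac:(lia)). rewrite Enu, left_affine in H.
      assert (E1 : V m (S s) = V m 0) by (rewrite e; apply V_m; lia).
      rewrite E1 in H. fold (V m 0) in H. replace (left m 0 (V m 0)) with 0 in H by (rewrite left_self1; auto).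
      assert (0 < left m 0 (V m s)) by (apply left_V_strict; lia). nra.
    + assert (H := hq (S s) ltac:(lia)). rewrite Enu, left_affine in H.
      rewrite left_self1 in H.
      assert (0 < left m (S s) (V m s)) by (apply left_V_strict; lia). nra.
  - destruct s as [|s'].
    + assert (H := hq (m - 1)%nat ltac:(lia)). rewrite Enu, left_affine in H.
      assert (E1 : V m (S (m - 1)) = V m 0) by (replace (S (m - 1)) with m by lia; apply V_m; lia).
      assert (0 = left m (m - 1) (V m 0)) by (rewrite <- E1, left_self2; auto).
      rewrite <- H0 in H.
      assert (0 < left m (m - 1) (V m 1)) by (apply left_V_strict; lia). nra.
    + assert (H := hq s' ltac:(lia)). rewrite Enu, left_affine in H.
      rewrite left_self2 in H.
      destruct (Nat.eq_dec (S (S s')) m) as [e|e].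
      * assert (E1 : V m (S (S s')) = V m 0) by (rewrite e; apply V_m; lia).
        rewrite E1 in H.
        assert (0 < left m s' (V m 0)) by (apply left_V_strict; lia). nra.
      * assert (0 < left m s' (V m (S (S s')))) by (apply left_V_strict; lia). nra.
Qed.

End Fsec2.

End F.
Import F.

Module G.
Open Scope R_scope.
Set Default Proof Using "All".

Lemma finite_max (f : nat -> R) (m : nat) : (1 <= m)%nat -> exists s0, (s0 < m)%nat /\ forall s, (s < m)%nat -> f s <= f s0.
Proof.
  induction m as [|m IH]; intro hm. lia.
  destruct (Nat.eq_dec m 0). subst. exists 0%nat. split. lia. intros s hs. replace s with 0%nat by lia. lra.
  destruct (IH ltac:(lia)) as [s0 [hs0 H]].
  destruct (Rle_lt_dec (f m) (f s0)).
  - exists s0. split. lia. intros s hs. destruct (Nat.eq_dec s m). subst; auto. apply H; lia.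
  - exists m. split. lia. intros s hs. destruct (Nat.eq_dec s m). subst; lra. specialize (H s ltac:(lia)). lra.
Qed.

Section Gsec2.
Variables a b p : R.
Hypothesis ha : 0 < a.
Hypothesis hb : 0 < b.
Hypothesis hp : 1 < p.

Notation V := (vertex a b p).
Notation F := (FF a b p).
Notation left := (D.left a b p).
Notation inQ := (D.inQ a b p).

Lemma d2_lc x q t : sqd x (lc (1 - t) t x q) = t ^ 2 * sqd x q.
Proof. unfold sqd, lc; simpl; ring. Qed.

Lemma crossing m xs q : (3 <= m)%nat -> (exists s, (s < m)%nat /\ left m s xs < 0) -> inQ m q ->
  exists r, polygon a b p m r /\ sqd xs r <= sqd xs q.
Proof.
  intros hm [s1 [hs1 hx1]] hq.
  set (tau := fun s => if Rlt_dec (left m s xs) 0 then left m s xs / (left m s xs - left m s q) else 0).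
  assert (tau_rng : forall s, (s < m)%nat -> 0 <= tau s <= 1).
  { intros s hs. unfold tau. destruct (Rlt_dec (left m s xs) 0); [|lra].
    assert (0 <= left m s q) by (apply hq; auto).
    replace (left m s xs / (left m s xs - left m s q)) with ((- left m s xs) / (- left m s xs + left m s q)) by (field; lra).
    split. apply div_ge0; lra. apply div_le1; lra. }
  destruct (finite_max tau m ltac:(lia)) as [s0 [hs0 Hmax]].
  set (T := tau s0).
  assert (hT1 : 0 < tau s1).
  { unfold tau. destruct (Rlt_dec (left m s1 xs) 0); [|lra].
    assert (0 <= left m s1 q) by (apply hq; auto).
    replace (left m s1 xs / (left m s1 xs - left m s1 q)) with ((- left m s1 xs) / (- left m s1 xs + left m s1 q)) by (field; lra).
    apply Rdiv_lt_0_compat; lra. }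
  assert (hT : 0 < T <= 1) by (specialize (Hmax s1 hs1); specialize (tau_rng s0 hs0); unfold T; lra).
  assert (hx0 : left m s0 xs < 0).
  { destruct (Rlt_dec (left m s0 xs) 0) as [h|h]; auto. exfalso. unfold T, tau in hT. destruct (Rlt_dec (left m s0 xs) 0); [contradiction| lra]. }
  assert (ET : T = left m s0 xs / (left m s0 xs - left m s0 q)).
  { unfold T, tau. destruct (Rlt_dec (left m s0 xs) 0); [auto| contradiction]. }
  set (r := lc (1 - T) T xs q).
  exists r. split.
  - assert (hr : inQ m r).
    { intros s hs. unfold r. rewrite (left_affine a b p ha hb hp).
      assert (0 <= left m s q) by (apply hq; auto).
      destruct (Rlt_dec (left m s xs) 0) as [h|h].
      + assert (tau s <= T) by (apply Hmax; auto).
        unfold tau in H0. destruct (Rlt_dec (left m s xs) 0); [|contradiction].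
        replace (left m s xs / (left m s xs - left m s q)) with ((- left m s xs) / (- left m s xs + left m s q)) in H0 by (field; lra).
        assert ((- left m s xs) <= T * (- left m s xs + left m s q)).
        { apply Rmult_le_reg_r with (/ (- left m s xs + left m s q)). apply Rinv_0_lt_compat; lra.
          rewrite Rmult_assoc, Rinv_r by lra. unfold Rdiv in H0. lra. }
        nra.
      + nra. }
    assert (hl0 : left m s0 r = 0).
    { unfold r. rewrite (left_affine a b p ha hb hp). rewrite ET. field. assert (0 <= left m s0 q) by (apply hq; auto). lra. }
    exists s0. split; auto. apply line_Q_edge; auto.
  - unfold r. rewrite d2_lc. assert (0 <= sqd xs q) by apply sqd_ge0. assert (T ^ 2 <= 1) by nra. assert (T ^ 2 * sqd xs q <= 1 * sqd xs q) by (apply Rmult_le_compat_r; lra). lra.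
Qed.

Lemma not_inQ m xs : (3 <= m)%nat -> 1 < F xs -> exists s, (s < m)%nat /\ left m s xs < 0.
Proof.
  intros hm hx. apply NNPP. intro N.
  assert (inQ m xs). { intros s hs. destruct (Rle_lt_dec 0 (left m s xs)); auto. exfalso. apply N. exists s; auto. }
  assert (F xs <= 1) by (apply (Q_sub_D a b p ha hb hp m); auto). lra.
Qed.

Definition optP (m : nat) (xs w : R * R) : Prop :=
  polygon a b p m w /\ forall z, polygon a b p m z -> sqd xs w <= sqd xs z.

Lemma hull_first_order m xs w z : (3 <= m)%nat -> 1 < F xs -> optP m xs w -> inQ m z ->
  dot (vsub z w) (vsub xs w) <= 0.
Proof.
  intros hm hx [hw hopt] hz.
  destruct (Rle_lt_dec (dot (vsub z w) (vsub xs w)) 0) as [h|h]; auto. exfalso.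
  set (hh := dot (vsub z w) (vsub xs w)) in *.
  set (DD := sqd z w).
  assert (hD : 0 < DD).
  { unfold DD, sqd. destruct (Req_dec (fst z) (fst w)); destruct (Req_dec (snd z) (snd w)).
    - exfalso. unfold hh, dot, vsub in h. simpl in h. rewrite H, H0 in h. lra.
    - nra. - nra. - nra. }
  set (eps := Rmin 1 (hh / DD)).
  assert (he : 0 < eps <= 1) by (unfold eps; split; [apply Rmin_pos; [lra| apply Rdiv_lt_0_compat; lra]| apply Rmin_l]).
  assert (heD : eps * DD <= hh).
  { assert (eps <= hh / DD) by apply Rmin_r. apply Rmult_le_reg_r with (/ DD). apply Rinv_0_lt_compat; lra.
    rewrite Rmult_assoc, Rinv_r by lra. unfold Rdiv in H. lra. }
  set (q := lc (1 - eps) eps w z).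
  assert (hq : inQ m q) by (apply inQ_conv; auto; [apply polygon_inQ; auto| lra]).
  assert (Eq : sqd xs q = sqd xs w - 2 * eps * hh + eps ^ 2 * DD) by (unfold q, hh, DD, sqd, dot, vsub, lc; simpl; ring).
  destruct (crossing m xs q hm (not_inQ m xs hm hx) hq) as [r [hr hdr]].
  specialize (hopt r hr). nra.
Qed.

End Gsec2.

End G.
Import G.

Module H.
Open Scope R_scope.

Lemma sqd_expand xs W z : sqd xs z = sqd xs W - 2 * dot (vsub z W) (vsub xs W) + sqd z W.
Proof. unfold sqd, dot, vsub; simpl; ring. Qed.

Lemma sqd_ge_of_h xs W z : dot (vsub z W) (vsub xs W) <= 0 -> sqd xs W <= sqd xs z.
Proof. intro. rewrite (sqd_expand xs W z). generalize (sqd_ge0 z W). lra. Qed.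

Lemma dot_lc_aff A B W v s : dot (vsub (lc (1 - s) s A B) W) v = (1 - s) * dot (vsub A W) v + s * dot (vsub B W) v.
Proof. unfold dot, vsub, lc; simpl; ring. Qed.

Lemma h_seg xs W A B s : 0 <= s <= 1 -> dot (vsub A W) (vsub xs W) <= 0 -> dot (vsub B W) (vsub xs W) <= 0 ->
  sqd xs W <= sqd xs (lc (1 - s) s A B).
Proof. intros. apply sqd_ge_of_h. rewrite dot_lc_aff. nra. Qed.

Lemma cone_lemma A W B z v : 0 < cr (vsub W A) (vsub B W) ->
  dot (vsub B W) v <= 0 -> dot (vsub A W) v <= 0 ->
  0 <= cr (vsub W A) (vsub z A) -> 0 <= cr (vsub B W) (vsub z W) -> dot (vsub z W) v <= 0.
Proof.
  destruct A as [a1 a2], W as [w1 w2], B as [b1 b2], z as [z1 z2], v as [v1 v2].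
  unfold cr, dot, vsub; simpl. intros H0 H1 H2 H3 H4.
  set (c := (w1 - a1) * (b2 - w2) - (w2 - a2) * (b1 - w1)) in *.
  assert (E : c * ((z1 - w1) * v1 + (z2 - w2) * v2) =
     ((w1 - a1) * (z2 - a2) - (w2 - a2) * (z1 - a1)) * ((b1 - w1) * v1 + (b2 - w2) * v2)
     + ((b1 - w1) * (z2 - w2) - (b2 - w2) * (z1 - w1)) * ((a1 - w1) * v1 + (a2 - w2) * v2)).
  { unfold c. ring. }
  assert (c * ((z1 - w1) * v1 + (z2 - w2) * v2) <= 0) by (rewrite E; nra).
  destruct (Rle_lt_dec ((z1 - w1) * v1 + (z2 - w2) * v2) 0); auto. nra.
Qed.

Lemma acute_compare xs W M B s : 0 <= s <= 1 -> dot (vsub B W) (vsub xs W) <= 0 ->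
  0 <= dot (vsub M W) (vsub B W) ->
  sqd xs (lc (1 - s) s M W) <= sqd xs (lc (1 - s) s M B).
Proof.
  destruct xs as [x1 x2], W as [w1 w2], M as [m1 m2], B as [b1 b2].
  unfold sqd, dot, vsub, lc; simpl. intros hs h1 h2.
  assert (E : ((x1 - ((1 - s) * m1 + s * b1)) ^ 2 + (x2 - ((1 - s) * m2 + s * b2)) ^ 2)
            - ((x1 - ((1 - s) * m1 + s * w1)) ^ 2 + (x2 - ((1 - s) * m2 + s * w2)) ^ 2)
    = - 2 * s * ((b1 - w1) * (x1 - w1) + (b2 - w2) * (x2 - w2))
      + 2 * s * (1 - s) * ((m1 - w1) * (b1 - w1) + (m2 - w2) * (b2 - w2))
      + s ^ 2 * ((b1 - w1) ^ 2 + (b2 - w2) ^ 2)) by ring.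
  assert (0 <= s * (1 - s)) by nra.
  assert (0 <= s ^ 2 * ((b1 - w1) ^ 2 + (b2 - w2) ^ 2)) by (apply Rmult_le_pos; [apply pow2_ge_0 | apply Rplus_le_le_0_compat; apply pow2_ge_0]).
  assert (0 <= - 2 * s * ((b1 - w1) * (x1 - w1) + (b2 - w2) * (x2 - w2))) by nra.
  assert (0 <= 2 * s * (1 - s) * ((m1 - w1) * (b1 - w1) + (m2 - w2) * (b2 - w2))) by nra.
  lra.
Qed.

Definition padd (w d : R * R) (e : R) : R * R := (fst w + e * fst d, snd w + e * snd d).

Lemma dir_first_order xs w d e0 : 0 < e0 ->
  (forall e, 0 < e <= e0 -> sqd xs w <= sqd xs (padd w d e)) -> dot d (vsub xs w) <= 0.
Proof.
  intros he0 H.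
  destruct (Rle_lt_dec (dot d (vsub xs w)) 0) as [h|h]; auto. exfalso.
  set (hh := dot d (vsub xs w)) in *.
  set (DD := fst d ^ 2 + snd d ^ 2).
  assert (hD : 0 <= DD) by (unfold DD; nra).
  set (e := Rmin e0 (hh / (DD + 1))).
  assert (he : 0 < e) by (unfold e; apply Rmin_pos; [lra| apply Rdiv_lt_0_compat; lra]).
  assert (he1 : e <= e0) by apply Rmin_l.
  assert (he2 : e * (DD + 1) <= hh).
  { assert (e <= hh / (DD + 1)) by apply Rmin_r. apply Rmult_le_reg_r with (/ (DD + 1)). apply Rinv_0_lt_compat; lra.
    rewrite Rmult_assoc, Rinv_r by lra. unfold Rdiv in *; lra. }
  specialize (H e (conj he he1)).
  assert (E : sqd xs (padd w d e) = sqd xs w - 2 * e * hh + e ^ 2 * DD) by (unfold padd, hh, DD, sqd, dot, vsub; simpl; ring).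
  rewrite E in H.
  assert (e ^ 2 * DD <= e * hh) by nra.
  nra.
Qed.

Lemma seg_fo_B xs A B s : 0 <= s < 1 ->
  (forall s', 0 <= s' <= 1 -> sqd xs (lc (1 - s) s A B) <= sqd xs (lc (1 - s') s' A B)) ->
  dot (vsub B (lc (1 - s) s A B)) (vsub xs (lc (1 - s) s A B)) <= 0.
Proof.
  intros hs H. apply dir_first_order with (e0 := 1). lra.
  intros e he. replace (padd (lc (1 - s) s A B) (vsub B (lc (1 - s) s A B)) e) with (lc (1 - (s + e * (1 - s))) (s + e * (1 - s)) A B).
  apply H. nra. unfold padd, lc, vsub; simpl. f_equal; ring.
Qed.

Lemma seg_fo_A xs A B s : 0 < s <= 1 ->
  (forall s', 0 <= s' <= 1 -> sqd xs (lc (1 - s) s A B) <= sqd xs (lc (1 - s') s' A B)) ->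
  dot (vsub A (lc (1 - s) s A B)) (vsub xs (lc (1 - s) s A B)) <= 0.
Proof.
  intros hs H. apply dir_first_order with (e0 := 1). lra.
  intros e he. replace (padd (lc (1 - s) s A B) (vsub A (lc (1 - s) s A B)) e) with (lc (1 - (s - e * s)) (s - e * s) A B).
  apply H. nra. unfold padd, lc, vsub; simpl. f_equal; ring.
Qed.

Lemma relint_core W0 W1 M xs s : 0 < s < 1 ->
  dot (vsub W1 (lc (1 - s) s W0 W1)) (vsub xs (lc (1 - s) s W0 W1)) <= 0 ->
  dot (vsub W0 (lc (1 - s) s W0 W1)) (vsub xs (lc (1 - s) s W0 W1)) <= 0 ->
  0 < cr (vsub W1 W0) (vsub (0, 0) W0) ->
  dot (vsub (0, 0) (lc (1 - s) s W0 W1)) (vsub xs (lc (1 - s) s W0 W1)) <= 0 ->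
  cr (vsub W1 W0) (vsub M W0) < 0 ->
  xs <> lc (1 - s) s W0 W1 ->
  (forall r l, (seg W0 M r \/ seg M W1 r) -> 0 <= l <= 1 -> xs <> lc (1 - l) l (lc (1 - s) s W0 W1) r) ->
  (forall z, 0 <= cr (vsub W1 W0) (vsub z W0) -> sqd xs (lc (1 - s) s W0 W1) <= sqd xs z) /\
  (exists r, (seg W0 M r \/ seg M W1 r) /\ sqd xs r <= sqd xs (lc (1 - s) s W0 W1)).
Proof.
  intros hs h1 h0 hO hOd hM hne Hout.
  set (w := lc (1 - s) s W0 W1) in *.
  destruct W0 as [p1 p2], W1 as [q1 q2], M as [m1 m2], xs as [x1 x2].
  set (e1 := q1 - p1). set (e2 := q2 - p2).
  set (v1 := x1 - fst w). set (v2 := x2 - snd w).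
  assert (Ew1 : fst w = p1 + s * e1) by (unfold w, lc, e1; simpl; ring).
  assert (Ew2 : snd w = p2 + s * e2) by (unfold w, lc, e2; simpl; ring).
  unfold dot, vsub, cr in *; simpl in *. fold v1 v2 in h1, h0, hOd.
  assert (hdot : e1 * v1 + e2 * v2 = 0).
  { rewrite Ew1, Ew2 in h1, h0. unfold e1, e2 in *. nra. }
  set (E := e1 ^ 2 + e2 ^ 2).
  assert (hE : 0 < E).
  { unfold E. destruct (Req_dec e1 0); destruct (Req_dec e2 0); [| nra ..].
    exfalso. unfold e1, e2 in *. assert (q1 = p1) by lra. assert (q2 = p2) by lra. subst. nra. }
  set (c := e1 * v2 - e2 * v1).
  assert (Hv1' : v1 * E = - c * e2).
  { unfold c, E. assert (e1 * (e1 * v1 + e2 * v2) = 0) by (rewrite hdot; ring). lra. }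
  assert (Hv2' : v2 * E = c * e1).
  { unfold c, E. assert (e2 * (e1 * v1 + e2 * v2) = 0) by (rewrite hdot; ring). lra. }
  assert (Hv1 : v1 = - c * e2 / E).
  { apply Rmult_eq_reg_r with E; [|lra]. unfold Rdiv. rewrite Rmult_assoc, Rinv_l by lra. lra. }
  assert (Hv2 : v2 = c * e1 / E).
  { apply Rmult_eq_reg_r with E; [|lra]. unfold Rdiv. rewrite Rmult_assoc, Rinv_l by lra. lra. }
  assert (hc0 : c <= 0).
  { rewrite Ew1, Ew2 in hOd. fold v1 v2 in hOd.
    replace ((0 - (p1 + s * e1)) * v1 + (0 - (p2 + s * e2)) * v2) with (- p1 * v1 - p2 * v2 - s * (e1 * v1 + e2 * v2)) in hOd by ring.
    rewrite hdot in hOd. rewrite Hv1, Hv2 in hOd.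
    assert (Eq : - p1 * (- c * e2 / E) - p2 * (c * e1 / E) - s * 0 = c * (e1 * (0 - p2) - e2 * (0 - p1)) / E) by (field; lra).
    rewrite Eq in hOd. fold e1 e2 in hO.
    destruct (Rle_lt_dec c 0); auto. exfalso.
    assert (0 < c * (e1 * (0 - p2) - e2 * (0 - p1)) / E) by (apply Rdiv_lt_0_compat; [apply Rmult_lt_0_compat|]; lra). lra. }
  assert (hc : c < 0).
  { destruct hc0 as [h|h]; auto. exfalso. apply hne.
    assert (v1 = 0). { rewrite h in Hv1'. assert (v1 * E = 0) by lra. apply Rmult_integral in H. destruct H; lra. }
    assert (v2 = 0). { rewrite h in Hv2'. assert (v2 * E = 0) by lra. apply Rmult_integral in H0. destruct H0; lra. }
    unfold v1, v2, w, lc in *; simpl in *. f_equal; lra. }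
  split.
  - intros [z1 z2] Hz. fold e1 e2 in Hz. apply sqd_ge_of_h. unfold dot, vsub; simpl. fold v1 v2.
    rewrite Hv1, Hv2, Ew1, Ew2.
    assert (Eq : (z1 - (p1 + s * e1)) * (- c * e2 / E) + (z2 - (p2 + s * e2)) * (c * e1 / E)
                 = c * (e1 * (z2 - p2) - e2 * (z1 - p1)) / E) by (field; lra).
    rewrite Eq. unfold Rdiv.
    simpl in Hz. assert (c * (e1 * (z2 - p2) - e2 * (z1 - p1)) <= 0) by nra.
    assert (0 < / E) by (apply Rinv_0_lt_compat; lra). nra.
  - set (LM := e1 * (m2 - p2) - e2 * (m1 - p1)) in *.
    assert (hLM : LM < 0) by (unfold LM, e1, e2; lra).
    set (PM := ((m1 - p1) * e1 + (m2 - p2) * e2) / E).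
    assert (HM1 : m1 - p1 = PM * e1 - LM * e2 / E) by (unfold PM, LM; field_simplify_eq; [unfold E; ring| lra]).
    assert (HM2 : m2 - p2 = PM * e2 + LM * e1 / E) by (unfold PM, LM; field_simplify_eq; [unfold E; ring| lra]).
    assert (Hgen : forall r1 r2 tau, 0 <= tau -> r1 = fst w + tau * v1 -> r2 = snd w + tau * v2 ->
              (seg (p1, p2) (m1, m2) (r1, r2) \/ seg (m1, m2) (q1, q2) (r1, r2)) ->
              exists r, (seg (p1, p2) (m1, m2) r \/ seg (m1, m2) (q1, q2) r) /\
                        sqd (x1, x2) r <= sqd (x1, x2) w).
    { intros r1 r2 tau htau Er1 Er2 Hseg. exists (r1, r2). split; auto.
      assert (tau <= 1).
      { destruct (Rle_lt_dec tau 1); auto. exfalso.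
        apply (Hout (r1, r2) (/ tau) Hseg). split. left; apply Rinv_0_lt_compat; lra.
        rewrite <- Rinv_1. left; apply Rinv_lt_contravar; lra.
        fold w. unfold lc at 1; simpl. rewrite Er1, Er2. unfold v1, v2, w, lc; simpl. f_equal; field; lra. }
      unfold sqd; cbn [fst snd]. rewrite Er1, Er2.
      assert (Hd1 : v1 = x1 - fst w) by reflexivity. assert (Hd2 : v2 = x2 - snd w) by reflexivity.
      replace (x1 - (fst w + tau * v1)) with ((1 - tau) * v1) by lra.
      replace (x2 - (snd w + tau * v2)) with ((1 - tau) * v2) by lra.
      rewrite <- Hd1, <- Hd2.
      assert ((1 - tau) ^ 2 <= 1) by nra. nra. }
    destruct (Rle_lt_dec s PM) as [hsP|hsP].
    + assert (hPM : 0 < PM) by lra.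
      set (sg := s / PM). set (tau := sg * LM / c).
      assert (hsg : 0 < sg <= 1) by (unfold sg; split; [apply Rdiv_lt_0_compat; lra| apply div_le1; lra]).
      apply (Hgen ((1 - sg) * p1 + sg * m1) ((1 - sg) * p2 + sg * m2) tau).
      * unfold tau. replace (sg * LM / c) with (sg * (- LM) / (- c)) by (field; lra).
        apply div_ge0; nra.
      * unfold w, lc; cbn [fst snd]. rewrite Ew1, Hv1. unfold tau, sg. replace ((1 - s / PM) * p1 + s / PM * m1) with (p1 + s / PM * (m1 - p1)) by ring.
        rewrite HM1. field. split; lra.
      * unfold w, lc; cbn [fst snd]. rewrite Ew2, Hv2. unfold tau, sg. replace ((1 - s / PM) * p2 + s / PM * m2) with (p2 + s / PM * (m2 - p2)) by ring.
        rewrite HM2. field. split; lra.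
      * left. exists sg. split; [lra| auto].
    + assert (hPM1 : PM < 1) by lra.
      set (sg := (s - PM) / (1 - PM)). set (tau := (1 - sg) * LM / c).
      assert (hsg : 0 < sg < 1) by (unfold sg; split; [apply Rdiv_lt_0_compat; lra| apply div_lt1; lra]).
      apply (Hgen ((1 - sg) * m1 + sg * q1) ((1 - sg) * m2 + sg * q2) tau).
      * unfold tau. replace ((1 - sg) * LM / c) with ((1 - sg) * (- LM) / (- c)) by (field; lra).
        apply div_ge0; nra.
      * unfold w, lc; cbn [fst snd]. rewrite Ew1, Hv1. unfold tau, sg.
        replace ((1 - (s - PM) / (1 - PM)) * m1 + (s - PM) / (1 - PM) * q1)
          with (p1 + (1 - (s - PM) / (1 - PM)) * (m1 - p1) + (s - PM) / (1 - PM) * e1) by (unfold e1; field; lra).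
        rewrite HM1. field. split; lra.
      * unfold w, lc; cbn [fst snd]. rewrite Ew2, Hv2. unfold tau, sg.
        replace ((1 - (s - PM) / (1 - PM)) * m2 + (s - PM) / (1 - PM) * q2)
          with (p2 + (1 - (s - PM) / (1 - PM)) * (m2 - p2) + (s - PM) / (1 - PM) * e2) by (unfold e2; field; lra).
        rewrite HM2. field. split; lra.
      * right. exists sg. split; [lra| auto].
Qed.

End H.
Import H.

Module I.
Open Scope R_scope.

Definition acv (a b p al de : R) : R :=
  dot (vsub (gam a b p (al + de)) (gam a b p al)) (vsub (gam a b p (al + 2 * de)) (gam a b p al)).


Lemma abspow_even u p : abspow (- u) p = abspow u p.
Proof.
  unfold abspow. destruct (Req_EM_T (- u) 0); destruct (Req_EM_T u 0); try lra; auto.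
  rewrite Rabs_Ropp; auto.
Qed.

Lemma pnorm_swap a b p x y : pnorm a b p (- y, x) = pnorm b a p (x, y).
Proof.
  unfold pnorm; simpl. replace (- y / a) with (- (y / a)) by (unfold Rdiv; ring).
  rewrite abspow_even. rewrite (Rplus_comm (abspow (y / a) p)). reflexivity.
Qed.

Lemma pnorm_refl a b p x y : pnorm a b p (x, - y) = pnorm a b p (x, y).
Proof.
  unfold pnorm; simpl. replace (- y / b) with (- (y / b)) by (unfold Rdiv; ring).
  rewrite abspow_even. reflexivity.
Qed.

Lemma pnorm_mirror a b p x y : pnorm a b p (- x, y) = pnorm a b p (x, y).
Proof.
  unfold pnorm; simpl. replace (- x / a) with (- (x / a)) by (unfold Rdiv; ring).
  rewrite abspow_even. reflexivity.
Qed.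

Lemma gam_rot a b p th : gam a b p (th + PI / 2) = (- snd (gam b a p th), fst (gam b a p th)).
Proof.
  unfold gam, phi. simpl.
  replace (cos (th + PI / 2)) with (- sin th) by (rewrite cos_plus, cos_PI2, sin_PI2; ring).
  replace (sin (th + PI / 2)) with (cos th) by (rewrite sin_plus, cos_PI2, sin_PI2; ring).
  rewrite pnorm_swap. f_equal. unfold Rdiv; ring.
Qed.

Lemma gam_neg a b p th : gam a b p (- th) = (fst (gam a b p th), - snd (gam a b p th)).
Proof.
  unfold gam, phi. simpl. rewrite cos_neg, sin_neg. rewrite pnorm_refl. f_equal. unfold Rdiv; ring.
Qed.

Lemma gam_mirror a b p th : gam a b p (PI - th) = (- fst (gam a b p th), snd (gam a b p th)).
Proof.
  unfold gam, phi. simpl. rewrite sin_PI_x.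
  replace (cos (PI - th)) with (- cos th) by (rewrite cos_minus, cos_PI, sin_PI; ring).
  rewrite pnorm_mirror. f_equal. unfold Rdiv; ring.
Qed.

Lemma acv_rot a b p al de : acv a b p (al + PI / 2) de = acv b a p al de.
Proof.
  unfold acv.
  replace (al + PI / 2 + de) with ((al + de) + PI / 2) by ring.
  replace (al + PI / 2 + 2 * de) with ((al + 2 * de) + PI / 2) by ring.
  rewrite !gam_rot. unfold dot, vsub; cbn [fst snd]. ring.
Qed.

Section Mono.
Variables a b p : R.
Hypothesis ha : 0 < a.
Hypothesis hb : 0 < b.
Hypothesis hp : 1 < p.

Lemma F_mono_lt x1 y1 x2 y2 : 0 <= x1 -> x1 < x2 -> 0 <= y1 -> y1 <= y2 -> FF a b p (x1, y1) < FF a b p (x2, y2).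
Proof.
  intros. unfold FF; simpl.
  assert (abspow (x1 / a) p < abspow (x2 / a) p).
  { apply ap_lt; auto. apply div_ge0; lra. unfold Rdiv. apply Rmult_lt_compat_r; auto. apply Rinv_0_lt_compat; auto. }
  assert (abspow (y1 / b) p <= abspow (y2 / b) p).
  { apply ap_le; auto. apply div_ge0; lra. unfold Rdiv. apply Rmult_le_compat_r; auto. left; apply Rinv_0_lt_compat; auto. }
  lra.
Qed.

Lemma F_mono_lt' x1 y1 x2 y2 : 0 <= y1 -> y1 < y2 -> 0 <= x1 -> x1 <= x2 -> FF a b p (x1, y1) < FF a b p (x2, y2).
Proof.
  intros. unfold FF; simpl.
  assert (abspow (x1 / a) p <= abspow (x2 / a) p).
  { apply ap_le; auto. apply div_ge0; lra. unfold Rdiv. apply Rmult_le_compat_r; auto. left; apply Rinv_0_lt_compat; auto. }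
  assert (abspow (y1 / b) p < abspow (y2 / b) p).
  { apply ap_lt; auto. apply div_ge0; lra. unfold Rdiv. apply Rmult_lt_compat_r; auto. apply Rinv_0_lt_compat; auto. }
  lra.
Qed.

Lemma mono_q1 x1 y1 x2 y2 : 0 <= x1 -> 0 <= y1 -> 0 <= x2 -> 0 <= y2 ->
  FF a b p (x1, y1) = 1 -> FF a b p (x2, y2) = 1 -> 0 <= x1 * y2 - y1 * x2 -> x2 <= x1 /\ y1 <= y2.
Proof.
  intros h1 h2 h3 h4 F1 F2 hc. split.
  - destruct (Rle_lt_dec x2 x1) as [h|h]; auto. exfalso.
    destruct (Req_dec x1 0) as [e|e].
    + subst. assert (y1 = 0) by nra. subst. rewrite (FF_0 a b p ha hb hp) in F1. lra.
    + assert (y1 <= y2) by (destruct (Rle_lt_dec y1 y2); auto; nra).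
      assert (FF a b p (x1, y1) < FF a b p (x2, y2)) by (apply F_mono_lt; auto). lra.
  - destruct (Rle_lt_dec y1 y2) as [h|h]; auto. exfalso.
    destruct (Req_dec y2 0) as [e|e].
    + subst. assert (x2 = 0) by nra. subst. rewrite (FF_0 a b p ha hb hp) in F2. lra.
    + assert (x2 <= x1) by (destruct (Rle_lt_dec x2 x1); auto; nra).
      assert (FF a b p (x2, y2) < FF a b p (x1, y1)) by (apply F_mono_lt'; auto). lra.
Qed.

Lemma gam_q1 th : 0 <= th <= PI / 2 -> 0 <= fst (gam a b p th) /\ 0 <= snd (gam a b p th).
Proof.
  intro h. rewrite gam_eq. simpl. generalize (Nn_pos a b p ha hb hp th); intro.
  split; apply div_ge0; auto. apply cos_ge_0; lra. apply sin_ge_0; generalize PI_RGT_0; lra.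
Qed.

Lemma gam_mono th1 th2 : 0 <= th1 <= th2 -> th2 <= PI / 2 ->
  fst (gam a b p th2) <= fst (gam a b p th1) /\ snd (gam a b p th1) <= snd (gam a b p th2).
Proof.
  intros h1 h2.
  destruct (gam_q1 th1 ltac:(lra)) as [u1 u2]. destruct (gam_q1 th2 ltac:(lra)) as [u3 u4].
  assert (F1 := FF_gam a b p ha hb hp th1). assert (F2 := FF_gam a b p ha hb hp th2).
  destruct (gam a b p th1) as [x1 y1] eqn:E1. destruct (gam a b p th2) as [x2 y2] eqn:E2. simpl in *.
  apply mono_q1; auto.
  assert (C := cr_gam a b p ha hb hp th1 th2). rewrite E1, E2 in C. unfold cr in C; simpl in C. rewrite C.
  apply div_ge0. apply sin_ge_0; generalize PI_RGT_0; lra.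
  generalize (Nn_pos a b p ha hb hp th1) (Nn_pos a b p ha hb hp th2). nra.
Qed.

Lemma AC_base (m i : nat) : (3 <= m)%nat -> (i < m)%nat ->
  0 <= acv a b p (INR i * (PI / (2 * INR m))) (PI / INR m).
Proof.
  intros hm hi.
  assert (HM : 3 <= INR m) by (replace 3 with (INR 3) by (simpl; ring); apply le_INR; auto).
  assert (PI_pos := PI_RGT_0).
  set (h := PI / (2 * INR m)).
  assert (hh : 0 < h) by (unfold h; apply Rdiv_lt_0_compat; lra).
  assert (Ede : PI / INR m = 2 * h) by (unfold h; field; lra).
  assert (Em : INR m * h = PI / 2) by (unfold h; field; lra).
  assert (hI : INR i + 1 <= INR m) by (rewrite <- S_INR; apply le_INR; lia).
  assert (hI0 : 0 <= INR i) by apply pos_INR.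
  unfold acv. rewrite Ede.
  set (al := INR i * h).
  destruct (le_lt_dec (i + 4) m) as [c1|c1].
  - (* all in the first quadrant *)
    assert (INR i + 4 <= INR m) by (replace 4 with (INR 4) by (simpl; ring); rewrite <- plus_INR; apply le_INR; auto).
    destruct (gam_mono al (al + 2 * h) ltac:(unfold al; nra) ltac:(unfold al; nra)) as [m1 m2].
    destruct (gam_mono al (al + 2 * (2 * h)) ltac:(unfold al; nra) ltac:(unfold al; nra)) as [m3 m4].
    unfold dot, vsub; cbn [fst snd]. apply Rplus_le_le_0_compat; nra.
  - assert (m = i + 3 \/ m = i + 2 \/ m = i + 1)%nat as [e|[e|e]] by lia.
    + (* tip between M and B *)
      assert (INR m = INR i + 3) by (rewrite e, plus_INR; simpl; ring).
      assert (EM : al + 2 * h = PI / 2 - h) by (unfold al; nra).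
      assert (EB : al + 2 * (2 * h) = PI - (PI / 2 - h)) by (unfold al; nra).
      rewrite EM, EB, gam_mirror.
      destruct (gam_mono al (PI / 2 - h) ltac:(unfold al; nra) ltac:(lra)) as [m1 m2].
      destruct (gam_q1 (PI / 2 - h) ltac:(unfold al in *; nra)) as [q1 q2].
      destruct (gam_q1 al ltac:(unfold al in *; nra)) as [q3 q4].
      unfold dot, vsub; cbn [fst snd]. nra.
    + (* tip at M *)
      assert (INR m = INR i + 2) by (rewrite e, plus_INR; simpl; ring).
      assert (EB : al + 2 * (2 * h) = PI - al) by (unfold al; nra).
      assert (EM : al + 2 * h = PI - (al + 2 * h)) by (unfold al; nra).
      rewrite EB, gam_mirror.
      assert (Mx : fst (gam a b p (al + 2 * h)) = 0).
      { assert (H0 := gam_mirror a b p (al + 2 * h)). rewrite <- EM in H0.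
        assert (fst (gam a b p (al + 2 * h)) = - fst (gam a b p (al + 2 * h))) by (rewrite H0 at 1; reflexivity). lra. }
      unfold dot, vsub; cbn [fst snd]. rewrite Mx. nra.
    + (* tip between W and M *)
      assert (INR m = INR i + 1) by (rewrite e, plus_INR; simpl; ring).
      assert (EM : al + 2 * h = PI - al) by (unfold al; nra).
      assert (EB : al + 2 * (2 * h) = PI - (al - 2 * h)) by (unfold al; nra).
      rewrite EM, EB, !gam_mirror.
      assert (0 <= al - 2 * h) by (unfold al; nra).
      destruct (gam_mono (al - 2 * h) al ltac:(lra) ltac:(unfold al; nra)) as [m1 m2].
      destruct (gam_q1 (al - 2 * h) ltac:(unfold al in *; nra)) as [q1 q2].
      destruct (gam_q1 al ltac:(unfold al in *; nra)) as [q3 q4].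
      unfold dot, vsub; cbn [fst snd]. nra.
Qed.

End Mono.

Lemma AC_all p (m : nat) : 1 < p -> (3 <= m)%nat -> forall (i : nat) (a b : R), 0 < a -> 0 < b ->
  0 <= acv a b p (INR i * (PI / (2 * INR m))) (PI / INR m).
Proof.
  intros hp hm i. induction i as [i IH] using (well_founded_induction lt_wf). intros a b ha hb.
  destruct (le_lt_dec m i) as [c|c].
  - assert (E : INR i * (PI / (2 * INR m)) = INR (i - m) * (PI / (2 * INR m)) + PI / 2).
    { rewrite minus_INR by auto. field. apply not_0_INR. lia. }
    rewrite E, acv_rot. apply IH; auto. lia.
  - apply AC_base; auto.
Qed.

End I.
Import I.

Module J.
Open Scope R_scope.
Set Default Proof Using "All".

Lemma dist2_sqd x y : dist2 x y = sqrt (sqd x y).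
Proof. reflexivity. Qed.

Lemma dist2_le x y z : dist2 x y <= dist2 x z <-> sqd x y <= sqd x z.
Proof.
  rewrite !dist2_sqd. split; intro H.
  - generalize (sqd_ge0 x y) (sqd_ge0 x z); intros.
    rewrite <- (sqrt_sqrt (sqd x y)), <- (sqrt_sqrt (sqd x z)) by auto.
    apply Rmult_le_compat; auto; apply sqrt_pos.
  - apply sqrt_le_1_alt; auto.
Qed.

Section Jsec.
Variables a b p : R.
Hypothesis ha : 0 < a.
Hypothesis hb : 0 < b.
Hypothesis hp : 1 < p.

Notation V := (vertex a b p).
Notation F := (FF a b p).
Notation Qv := (Qv a b p).

Lemma AC_plus m t : (3 <= m)%nat -> (t < m)%nat ->
  0 <= dot (vsub (Qv m (2 * t + 1)) (V m t)) (vsub (V m (S t)) (V m t)).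
Proof.
  intros hm ht.
  assert (HM : 3 <= INR m) by (apply INRm3; auto).
  assert (H := AC_all p m hp hm (4 * t) a b ha hb). unfold acv in H.
  unfold Qv, F.Qv. rewrite !vertex_gam.
  replace (ang (2 * m) (2 * t + 1)) with (INR (4 * t) * (PI / (2 * INR m)) + PI / INR m).
  replace (ang m (S t)) with (INR (4 * t) * (PI / (2 * INR m)) + 2 * (PI / INR m)).
  replace (ang m t) with (INR (4 * t) * (PI / (2 * INR m))). exact H.
  all: unfold ang; rewrite ?S_INR, ?plus_INR, ?mult_INR; simpl INR; field; lra.
Qed.

Lemma dot_refl_inv (A B C : R * R) :
  dot (vsub (fst A, - snd A) (fst C, - snd C)) (vsub (fst B, - snd B) (fst C, - snd C)) = dot (vsub A C) (vsub B C).
Proof. unfold dot, vsub; simpl; ring. Qed.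

Lemma AC_minus m t : (3 <= m)%nat -> (t < m)%nat ->
  0 <= dot (vsub (Qv m (2 * t + 2 * m - 1)) (V m t)) (vsub (V m (t + m - 1)) (V m t)).
Proof.
  intros hm ht.
  assert (HM : 3 <= INR m) by (apply INRm3; auto).
  assert (H := AC_all p m hp hm (4 * m - 4 * t) a b ha hb). unfold acv in H.
  set (al := ang m t).
  assert (E0 : INR (4 * m - 4 * t) * (PI / (2 * INR m)) = - al + 2 * INR 1 * PI).
  { unfold al, ang. rewrite minus_INR by lia. rewrite !mult_INR. simpl INR. field. lra. }
  rewrite E0 in H.
  replace (- al + 2 * INR 1 * PI + PI / INR m) with (- (al - PI / INR m) + 2 * INR 1 * PI) in H by ring.
  replace (- al + 2 * INR 1 * PI + 2 * (PI / INR m)) with (- (al - 2 * (PI / INR m)) + 2 * INR 1 * PI) in H by ring.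
  rewrite !gam_shift, !gam_neg in H. rewrite dot_refl_inv in H.
  unfold Qv, F.Qv. rewrite !vertex_gam. fold al.
  replace (ang (2 * m) (2 * t + 2 * m - 1)) with ((al - PI / INR m) + 2 * INR 1 * PI).
  replace (ang m (t + m - 1)) with ((al - 2 * (PI / INR m)) + 2 * INR 1 * PI).
  rewrite !gam_shift. exact H.
  all: unfold al, ang; rewrite ?minus_INR by lia; rewrite ?S_INR, ?plus_INR, ?mult_INR; simpl INR; field; lra.
Qed.

End Jsec.

End J.
Import J.

Module K.
Open Scope R_scope.
Set Default Proof Using "All".

Lemma lc10 A B : lc (1 - 0) 0 A B = A.
Proof. destruct A, B; unfold lc; simpl; f_equal; ring. Qed.
Lemma lc01 A B : lc (1 - 1) 1 A B = B.
Proof. destruct A, B; unfold lc; simpl; f_equal; ring. Qed.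
Lemma lc_swap s A B : lc (1 - s) s A B = lc (1 - (1 - s)) (1 - s) B A.
Proof. destruct A, B; unfold lc; simpl; f_equal; ring. Qed.

Lemma seg_of_lc A B s : 0 <= s <= 1 -> seg A B (lc (1 - s) s A B).
Proof. intros. exists s. split; auto. Qed.

Lemma lc_of_seg A B z : seg A B z -> exists s, 0 <= s <= 1 /\ z = lc (1 - s) s A B.
Proof. intros [s [hs E]]. exists s. split; auto. Qed.

Lemma nearer_unpack (S1 S2 : R * R -> Prop) xs x' : nearer_proj S1 S2 xs x' ->
  (S1 x' \/ S2 x') /\ (forall y, S1 y \/ S2 y -> sqd xs x' <= sqd xs y).
Proof.
  intros [y1 [y2 [[h1 H1] [[h2 H2] Hs]]]].
  destruct Hs as [[E D]|[E D]]; subst; split; auto; intros y [hy|hy].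
  - apply dist2_le. apply H1; auto.
  - apply dist2_le. eapply Rle_trans. exact D. apply H2; auto.
  - apply dist2_le. eapply Rle_trans. exact D. apply H1; auto.
  - apply dist2_le. apply H2; auto.
Qed.

Section Ksec.
Variables a b p : R.
Hypothesis ha : 0 < a.
Hypothesis hb : 0 < b.
Hypothesis hp : 1 < p.

Notation V := (vertex a b p).
Notation F := (FF a b p).
Notation Qv := (F.Qv a b p).
Notation left := (D.left a b p).
Notation optP := (G.optP a b p).
Notation QE := (Qv_even a b p ha hb hp).
Notation LQN := (left_Qv_nonneg a b p ha hb hp).

Lemma poly2_edge m j z : (j < 2 * m)%nat -> seg (Qv m j) (Qv m (S j)) z -> polygon a b p (2 * m) z.
Proof. intros. exists j. split; auto. Qed.

Lemma optP_edge_fo m xs w t : (t < m)%nat -> optP m xs w ->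
  forall s, 0 <= s <= 1 -> w = lc (1 - s) s (V m t) (V m (S t)) ->
  forall s', 0 <= s' <= 1 -> sqd xs (lc (1 - s) s (V m t) (V m (S t))) <= sqd xs (lc (1 - s') s' (V m t) (V m (S t))).
Proof.
  intros ht [hw Hopt] s hs Ew s' hs'. rewrite <- Ew. apply Hopt. exists t. split; auto. apply seg_of_lc; auto.
Qed.

Lemma left_lc_aff m t A B s : left m t (lc (1 - s) s A B) = (1 - s) * left m t A + s * left m t B.
Proof. apply (left_affine a b p ha hb hp). Qed.

Lemma core_vertex m t tm xs x' : (3 <= m)%nat -> (t < m)%nat -> (tm < m)%nat -> 1 < F xs ->
  V m (S tm) = V m t -> V m tm = V m (t + m - 1) -> Qv m (2 * t + 2 * m - 1) = Qv m (2 * tm + 1) ->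
  0 < left m tm (V m (S t)) ->
  optP m xs (V m t) ->
  nearer_proj (seg (Qv m (2 * t + 2 * m - 1)) (Qv m (2 * t))) (seg (Qv m (2 * t)) (Qv m (2 * t + 1))) xs x' ->
  optP (2 * m) xs x'.
Proof.
  intros hm ht htm hx E1 E2 E3 hturn Hopt Hnear.
  apply nearer_unpack in Hnear. destruct Hnear as [Hx' Hbest].
  set (W := V m t) in *. set (A := V m tm) in *. set (B := V m (S t)) in *.
  set (M := Qv m (2 * t + 1)) in *. set (M' := Qv m (2 * tm + 1)) in *.
  assert (QW : Qv m (2 * t) = W) by (apply QE; lia).
  assert (QW' : Qv m (2 * tm + 2) = W) by (replace (2 * tm + 2)%nat with (2 * S tm)%nat by lia; rewrite QE by lia; auto).
  assert (QB : Qv m (2 * t + 2) = B) by (replace (2 * t + 2)%nat with (2 * S t)%nat by lia; rewrite QE by lia; auto).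
  assert (QA : Qv m (2 * tm) = A) by (apply QE; lia).
  rewrite E3, QW in Hx', Hbest.
  assert (hB : dot (vsub B W) (vsub xs W) <= 0).
  { assert (H := seg_fo_B xs W B 0 ltac:(lra)). rewrite lc10 in H. apply H.
    intros s' hs'. destruct Hopt as [hw Ho]. apply Ho. exists t. split; auto. apply seg_of_lc; auto. }
  assert (hA : dot (vsub A W) (vsub xs W) <= 0).
  { assert (H := seg_fo_A xs A W 1 ltac:(lra)). rewrite lc01 in H. apply H.
    intros s' hs'. destruct Hopt as [hw Ho]. apply Ho. exists tm. split; auto. rewrite E1. apply seg_of_lc; auto. }
  assert (hturn' : 0 < cr (vsub W A) (vsub B W)).
  { unfold D.left in hturn. rewrite E1 in hturn. fold W A B in hturn.
    replace (cr (vsub W A) (vsub B W)) with (cr (vsub W A) (vsub B A)) by (unfold cr, vsub; simpl; ring). auto. }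
  assert (AC1 : 0 <= dot (vsub M W) (vsub B W)) by (apply (AC_plus a b p ha hb hp); auto).
  assert (AC2 : 0 <= dot (vsub M' W) (vsub A W)).
  { assert (H := AC_minus a b p ha hb hp m t hm ht). rewrite E3 in H. fold W M' in H. rewrite <- E2 in H. auto. }
  assert (Hcone : forall i, (i < 2 * m)%nat -> i <> (2 * t + 1)%nat -> i <> (2 * tm + 1)%nat ->
                    dot (vsub (Qv m i) W) (vsub xs W) <= 0).
  { intros i hi h1 h2. apply (cone_lemma A W B); auto.
    - assert (H := LQN m tm i hm htm hi h2). unfold D.left in H. rewrite E1 in H. auto.
    - assert (H := LQN m t i hm ht hi h1). unfold D.left in H. auto. }
  assert (Hcone' : forall i, (i <= 2 * m)%nat -> i <> (2 * t + 1)%nat -> i <> (2 * tm + 1)%nat ->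
                    dot (vsub (Qv m i) W) (vsub xs W) <= 0).
  { intros i hi h1 h2. destruct (Nat.eq_dec i (2 * m)) as [e|e].
    - subst. rewrite (Qv_2m a b p ha hb hp) by lia. apply Hcone; lia.
    - apply Hcone; lia. }
  assert (HW : sqd xs x' <= sqd xs W) by (apply Hbest; right; exists 0; split; [lra| rewrite <- QW; destruct (Qv m (2 * t)); simpl; f_equal; ring]).
  split.
  - destruct Hx' as [h|h].
    + destruct (Nat.eq_dec t 0) as [e|e].
      * exists (2 * m - 1)%nat. split. lia. replace (S (2 * m - 1)) with (2 * m)%nat by lia.
        change (seg (Qv m (2 * m - 1)) (Qv m (2 * m)) x').
        rewrite (Qv_2m a b p ha hb hp) by lia.
        assert (Q0 : Qv m 0 = W) by (rewrite <- QW; f_equal; lia). rewrite Q0.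
        assert (Q1 : Qv m (2 * m - 1) = M') by (rewrite <- E3; f_equal; lia). rewrite Q1. auto.
      * exists (2 * tm + 1)%nat. split. lia. replace (S (2 * tm + 1)) with (2 * tm + 2)%nat by lia.
        change (seg (Qv m (2 * tm + 1)) (Qv m (2 * tm + 2)) x'). rewrite QW'. auto.
    + exists (2 * t)%nat. split. lia. replace (S (2 * t)) with (2 * t + 1)%nat by lia.
      change (seg (Qv m (2 * t)) (Qv m (2 * t + 1)) x'). rewrite QW. auto.
  - intros z [j [hj hz]]. change (seg (Qv m j) (Qv m (S j)) z) in hz.
    apply lc_of_seg in hz. destruct hz as [s [hs Ez]]. subst z.
    destruct (Nat.eq_dec j (2 * t)) as [e|e].
    { subst j. apply Hbest. right. replace (S (2 * t)) with (2 * t + 1)%nat by lia. rewrite QW. apply seg_of_lc; auto. }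
    destruct (Nat.eq_dec j (2 * tm + 1)) as [e1|e1].
    { subst j. apply Hbest. left. replace (S (2 * tm + 1)) with (2 * tm + 2)%nat by lia. rewrite QW'. apply seg_of_lc; auto. }
    destruct (Nat.eq_dec j (2 * t + 1)) as [e2|e2].
    { subst j. replace (S (2 * t + 1)) with (2 * t + 2)%nat by lia. rewrite QB. fold M.
      eapply Rle_trans; [| apply (acute_compare xs W M B s); auto].
      apply Hbest. right. rewrite lc_swap. apply seg_of_lc. lra. }
    destruct (Nat.eq_dec j (2 * tm)) as [e3|e3].
    { subst j. replace (S (2 * tm)) with (2 * tm + 1)%nat by lia. rewrite QA. fold M'.
      rewrite lc_swap.
      eapply Rle_trans; [| apply (acute_compare xs W M' A (1 - s)); auto; lra].
      apply Hbest. left. apply seg_of_lc. lra. }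
    eapply Rle_trans. exact HW. apply h_seg; auto.
    all: first [apply Hcone; lia | apply Hcone'; lia].
Qed.

End Ksec.

End K.
Import K.

Module L.
Open Scope R_scope.
Set Default Proof Using "All".

Section Lsec.
Variables a b p : R.
Hypothesis ha : 0 < a.
Hypothesis hb : 0 < b.
Hypothesis hp : 1 < p.

Notation V := (vertex a b p).
Notation F := (FF a b p).
Notation Qv := (F.Qv a b p).
Notation left := (D.left a b p).
Notation optP := (G.optP a b p).
Notation QE := (Qv_even a b p ha hb hp).
Notation LQN := (left_Qv_nonneg a b p ha hb hp).

Lemma F_poly m z : (3 <= m)%nat -> polygon a b p m z -> F z <= 1.
Proof. intros. apply (Q_sub_D a b p ha hb hp m); auto. apply (polygon_inQ a b p ha hb hp); auto. Qed.

Lemma F_seg_C A B r : F A = 1 -> F B = 1 -> seg A B r -> F r <= 1.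
Proof.
  intros hA hB hr. apply lc_of_seg in hr. destruct hr as [s [hs E]]. subst.
  unfold lc. eapply Rle_trans. apply FF_comb; auto; lra. rewrite hA, hB. lra.
Qed.

Lemma core_relint m t s xs x' : (3 <= m)%nat -> (t < m)%nat -> 0 < s < 1 -> 1 < F xs ->
  optP m xs (lc (1 - s) s (V m t) (V m (S t))) ->
  nearer_proj (seg (Qv m (2 * t)) (Qv m (2 * t + 1))) (seg (Qv m (2 * t + 1)) (Qv m (2 * t + 2))) xs x' ->
  optP (2 * m) xs x'.
Proof.
  intros hm ht hs hx Hopt Hnear.
  apply nearer_unpack in Hnear. destruct Hnear as [Hx' Hbest].
  set (W0 := V m t) in *. set (W1 := V m (S t)) in *. set (M := Qv m (2 * t + 1)) in *.
  assert (QW0 : Qv m (2 * t) = W0) by (apply QE; lia).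
  assert (QW1 : Qv m (2 * t + 2) = W1) by (replace (2 * t + 2)%nat with (2 * S t)%nat by lia; rewrite QE by lia; auto).
  rewrite QW0, QW1 in Hx', Hbest.
  set (w := lc (1 - s) s W0 W1) in *.
  assert (Hedge : forall s', 0 <= s' <= 1 -> sqd xs (lc (1 - s) s W0 W1) <= sqd xs (lc (1 - s') s' W0 W1)).
  { intros s' hs'. destruct Hopt as [hw Ho]. apply Ho. exists t. split; auto. apply seg_of_lc; auto. }
  assert (hw1 : F w <= 1) by (destruct Hopt; apply (F_poly m); auto).
  destruct (relint_core W0 W1 M xs s hs) as [P1 P2].
  - apply seg_fo_B; auto. lra.
  - apply seg_fo_A; auto. lra.
  - assert (H := left_O a b p ha hb hp m t). unfold D.left in H. fold W0 W1 in H. rewrite H. apply (cr_V a b p ha hb hp); auto.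
  - apply (hull_first_order a b p ha hb hp m); auto. apply (inQ_O a b p ha hb hp); auto.
  - assert (H := odd_outside a b p ha hb hp m t hm ht). unfold D.left in H. auto.
  - intro E. fold w in E. rewrite <- E in hw1. lra.
  - intros r l Hr hl E. fold w in E.
    assert (F r <= 1).
    { destruct Hr as [Hr|Hr]; eapply F_seg_C; eauto; try apply (F_V a b p ha hb hp); unfold M, F.Qv; apply (F_V a b p ha hb hp). }
    assert (F xs <= 1) by (rewrite E; unfold lc; eapply Rle_trans; [apply FF_comb; auto; lra| nra]). lra.
  - destruct P2 as [r [Hr Hrw]].
    split.
    + destruct Hx' as [h|h].
      * exists (2 * t)%nat. split. lia. replace (S (2 * t)) with (2 * t + 1)%nat by lia.
        change (seg (Qv m (2 * t)) (Qv m (2 * t + 1)) x'). rewrite QW0. auto.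
      * exists (2 * t + 1)%nat. split. lia. replace (S (2 * t + 1)) with (2 * t + 2)%nat by lia.
        change (seg (Qv m (2 * t + 1)) (Qv m (2 * t + 2)) x'). rewrite QW1. auto.
    + intros z [j [hj hz]]. change (seg (Qv m j) (Qv m (S j)) z) in hz.
      destruct (Nat.eq_dec j (2 * t)) as [e|e].
      { subst j. apply Hbest. left. replace (S (2 * t)) with (2 * t + 1)%nat in hz by lia. rewrite QW0 in hz. auto. }
      destruct (Nat.eq_dec j (2 * t + 1)) as [e1|e1].
      { subst j. apply Hbest. right. replace (S (2 * t + 1)) with (2 * t + 2)%nat in hz by lia. rewrite QW1 in hz. auto. }
      assert (L1 : 0 <= left m t (Qv m j)) by (apply LQN; lia).
      assert (L2 : 0 <= left m t (Qv m (S j))).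
      { destruct (Nat.eq_dec (S j) (2 * m)) as [e2|e2].
        - rewrite e2, (Qv_2m a b p ha hb hp) by lia. apply LQN; lia.
        - apply LQN; lia. }
      apply lc_of_seg in hz. destruct hz as [s' [hs' Ez]].
      assert (Lz : 0 <= left m t z) by (rewrite Ez, (left_affine a b p ha hb hp); nra).
      eapply Rle_trans. apply Hbest. exact Hr. eapply Rle_trans. exact Hrw. apply P1. exact Lz.
Qed.

Lemma vertex_case m t xs x' : (3 <= m)%nat -> (t < m)%nat -> 1 < F xs -> optP m xs (V m t) ->
  nearer_proj (seg (Qv m (2 * t + 2 * m - 1)) (Qv m (2 * t))) (seg (Qv m (2 * t)) (Qv m (2 * t + 1))) xs x' ->
  optP (2 * m) xs x'.
Proof.
  intros hm ht hx Hopt Hnear.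
  destruct t as [|t0].
  - apply (core_vertex a b p ha hb hp m 0 (m - 1)); auto; try lia.
    + replace (S (m - 1)) with m by lia. apply (V_m a b p ha hb hp). lia.
    + f_equal. lia.
    + apply (left_V_strict a b p ha hb hp); lia.
  - apply (core_vertex a b p ha hb hp m (S t0) t0); auto; try lia.
    + replace (S t0 + m - 1)%nat with (t0 + m)%nat by lia. symmetry. apply vertex_period. lia.
    + unfold F.Qv. replace (2 * S t0 + 2 * m - 1)%nat with ((2 * t0 + 1) + 2 * m)%nat by lia. apply vertex_period. lia.
    + destruct (Nat.eq_dec (S (S t0)) m) as [e|e].
      * rewrite e, (V_m a b p ha hb hp) by lia. apply (left_V_strict a b p ha hb hp); lia.
      * apply (left_V_strict a b p ha hb hp); lia.
Qed.

Lemma propagate m xs w x' : (3 <= m)%nat -> 1 < F xs -> optP m xs w ->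
  refine_step a b p m xs w x' -> optP (2 * m) xs x'.
Proof.
  intros hm hx Hopt [R1 R2].
  destruct Hopt as [hw Ho]. destruct hw as [t [ht hwt]].
  apply lc_of_seg in hwt. destruct hwt as [s [hs Ew]].
  destruct (Req_dec s 0) as [e0|e0].
  - subst s. rewrite lc10 in Ew. subst w.
    apply (vertex_case m t); auto.
    + split; auto. exists t. split; auto. exists 0. split. lra. rewrite <- lc10 at 1. reflexivity.
    + apply R2; auto.
  - destruct (Req_dec s 1) as [e1|e1].
    + subst s. rewrite lc01 in Ew.
      assert (Hp : polygon a b p m w) by (exists t; split; auto; exists 1; split; [lra| rewrite Ew; rewrite <- lc01 at 1; reflexivity]).
      destruct (Nat.eq_dec (S t) m) as [e|e].
      * rewrite e, (V_m a b p ha hb hp) in Ew by lia. subst w. apply (vertex_case m 0); auto; try lia.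
        split; auto. apply R2; auto; lia.
      * subst w. apply (vertex_case m (S t)); auto; try lia. split; auto. apply R2; auto; lia.
    + assert (Hp : polygon a b p m w) by (exists t; split; auto; exists s; split; auto).
      subst w. apply (core_relint m t s); auto. lra. split; auto.
      apply R1; auto. exists s. split. lra. reflexivity.
Qed.

End Lsec.

End L.
Import L.

Module M.
Open Scope R_scope.
Set Default Proof Using "All".

Section Msec.
Variables a b p : R.
Hypothesis ha : 0 < a.
Hypothesis hb : 0 < b.
Hypothesis hp : 1 < p.

Notation V := (vertex a b p).
Notation F := (FF a b p).
Notation Qv := (F.Qv a b p).
Notation left := (D.left a b p).
Notation inQ := (D.inQ a b p).
Notation optP := (G.optP a b p).

Lemma left_lc3 m s l mu A B : left m s (lc l mu A B) = l * left m s A + mu * left m s B + (1 - l - mu) * left m s (0, 0).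
Proof. unfold D.left, cr, vsub, lc; simpl; ring. Qed.

Lemma Q_nested m z : (3 <= m)%nat -> inQ m z -> inQ (2 * m) z.
Proof.
  intros hm hq. destruct z as [x y].
  assert (H0 : (x,y) = (0,0) \/ (x,y) <> (0,0)).
  { destruct (Req_dec x 0); destruct (Req_dec y 0); [left; subst; auto | right; intro E; injection E; lra ..]. }
  destruct H0 as [E|hz]. rewrite E. apply (inQ_O a b p ha hb hp). lia.
  destruct (sector a b p ha hb hp m (x,y) hm hz) as [s [l [mu [hs [hl [hmu Ez]]]]]].
  assert (hc := cr_V a b p ha hb hp m s hm). assert (H1 := hq s hs). rewrite Ez, (left_lc a b p ha hb hp) in H1.
  assert (l + mu <= 1) by (destruct (Rle_dec (l + mu) 1); auto; exfalso; nra).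
  intros s' hs'. rewrite Ez, left_lc3.
  assert (0 <= left (2 * m) s' (V m s)).
  { rewrite <- (vertex_double a b p m s) by lia. apply (left_V_nonneg a b p ha hb hp); lia. }
  assert (0 <= left (2 * m) s' (V m (S s))).
  { rewrite <- (vertex_double a b p m (S s)) by lia. apply (left_V_nonneg a b p ha hb hp); lia. }
  assert (0 <= left (2 * m) s' (0, 0)) by (apply (inQ_O a b p ha hb hp); lia).
  nra.
Qed.

Variable k : nat.
Hypothesis hk : (3 <= k)%nat.
Variable xs : R * R.
Hypothesis hxs : 1 < F xs.
Variable x : nat -> R * R.
Definition mm (n : nat) : nat := (2 ^ (n - 1) * k)%nat.
Hypothesis Hinv : forall n, (1 <= n)%nat -> optP (mm n) xs (x n).

Lemma mm_ge3 n : (3 <= mm n)%nat.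
Proof. unfold mm. assert (1 <= 2 ^ (n - 1))%nat by (apply Nat.le_succ_l, Nat.neq_0_lt_0, Nat.pow_nonzero; lia). nia. Qed.

Lemma mm_S n : (1 <= n)%nat -> mm (S n) = (2 * mm n)%nat.
Proof. intro. unfold mm. replace (S n - 1)%nat with (S (n - 1)) by lia. rewrite Nat.pow_succ_r'. lia. Qed.

Lemma nested n n' : (1 <= n)%nat -> (n <= n')%nat -> inQ (mm n') (x n).
Proof.
  intros h1 h2. induction h2.
  - destruct (Hinv n h1) as [hw _]. apply (polygon_inQ a b p ha hb hp); auto. apply mm_ge3.
  - rewrite mm_S by lia. apply Q_nested; auto. apply mm_ge3.
Qed.

Lemma dec_ineq n n' : (1 <= n)%nat -> (n <= n')%nat ->
  sqd xs (x n') + sqd (x n) (x n') <= sqd xs (x n).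
Proof.
  intros h1 h2.
  assert (H := hull_first_order a b p ha hb hp (mm n') xs (x n') (x n) (mm_ge3 n') hxs (Hinv n' ltac:(lia)) (nested n n' h1 h2)).
  rewrite (sqd_expand xs (x n') (x n)). lra.
Qed.

Definition Dn (j : nat) : R := sqd xs (x (S j)).

Lemma Dn_cauchy : Cauchy_crit Dn.
Proof.
  apply CV_Cauchy. apply decreasing_cv.
  - intro j. unfold Dn. generalize (dec_ineq (S j) (S (S j)) ltac:(lia) ltac:(lia)) (sqd_ge0 (x (S j)) (x (S (S j)))). lra.
  - exists 0. intros y [j Ej]. unfold opp_seq in Ej. subst. generalize (sqd_ge0 xs (x (S j))). unfold Dn. lra.
Qed.

Lemma coord_bound j j' : (j <= j')%nat ->
  (fst (x (S j)) - fst (x (S j'))) ^ 2 <= Rabs (Dn j - Dn j') /\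
  (snd (x (S j)) - snd (x (S j'))) ^ 2 <= Rabs (Dn j - Dn j').
Proof.
  intro h. assert (H := dec_ineq (S j) (S j') ltac:(lia) ltac:(lia)).
  assert (E : sqd (x (S j)) (x (S j')) = (fst (x (S j)) - fst (x (S j'))) ^ 2 + (snd (x (S j)) - snd (x (S j'))) ^ 2) by reflexivity.
  generalize (sqd_ge0 (x (S j)) (x (S j'))); intro.
  unfold Dn. rewrite Rabs_pos_eq by lra.
  generalize (pow2_ge_0 (fst (x (S j)) - fst (x (S j')))) (pow2_ge_0 (snd (x (S j)) - snd (x (S j')))). lra.
Qed.

Lemma coord_cauchy (f : R * R -> R) : (f = fst \/ f = snd) -> Cauchy_crit (fun j => f (x (S j))).
Proof.
  intros hf eps he.
  destruct (Dn_cauchy (eps ^ 2) ltac:(nra)) as [N HN].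
  exists N. intros j j' hj hj'. unfold Rdist.
  assert (forall j j', (N <= j)%nat -> (N <= j')%nat -> (j <= j')%nat -> Rabs (f (x (S j)) - f (x (S j'))) < eps).
  { intros i i' hi hi' hii. destruct (coord_bound i i' hii) as [c1 c2].
    specialize (HN i i' hi hi'). unfold Rdist in HN.
    assert ((f (x (S i)) - f (x (S i'))) ^ 2 < eps ^ 2) by (destruct hf; subst; lra).
    rewrite <- (Rabs_pos_eq eps) by lra. apply Rsqr_lt_abs_0. unfold Rsqr. nra. }
  destruct (le_lt_dec j j'). apply H; auto. rewrite Rabs_minus_sym. apply H; auto; lia.
Qed.

End Msec.

End M.
Import M.

Module O.
Open Scope R_scope.
Set Default Proof Using "All".

Lemma cont_eps f x0 : continuity_pt f x0 -> forall eps, 0 < eps -> exists del, 0 < del /\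
  forall y, Rabs (y - x0) < del -> Rabs (f y - f x0) < eps.
Proof.
  intros H eps he. destruct (H eps he) as [del [hd Hd]]. exists del. split; auto.
  intros y hy. destruct (Req_dec y x0). subst. rewrite Rminus_diag, Rabs_R0. auto.
  apply (Hd y). split. split. exact I. auto. exact hy.
Qed.

Section Osec.
Variables a b p : R.
Hypothesis ha : 0 < a.
Hypothesis hb : 0 < b.
Hypothesis hp : 1 < p.

Definition Fc (t : R) : R := abspow (cos t / a) p + abspow (sin t / b) p.

Lemma Fc_pos t : 0 < Fc t.
Proof. unfold Fc. apply (FF_pos a b p ha hb hp). apply cs_nz. Qed.

Lemma Fc_cont t : continuity_pt Fc t.
Proof.
  unfold Fc. apply continuity_pt_plus.
  - apply continuity_pt_comp with (f1 := fun t => cos t / a) (f2 := fun u => abspow u p).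
    + unfold Rdiv. apply continuity_pt_mult. apply continuity_cos. apply continuity_pt_const. intros u v; auto.
    + apply continuity_abspow; auto.
  - apply continuity_pt_comp with (f1 := fun t => sin t / b) (f2 := fun u => abspow u p).
    + unfold Rdiv. apply continuity_pt_mult. apply continuity_sin. apply continuity_pt_const. intros u v; auto.
    + apply continuity_abspow; auto.
Qed.

Lemma Nn_formula t : Nn a b p t = exp (1 / p * ln (Fc t)).
Proof.
  unfold Nn. rewrite (pnorm_eq a b p ha hb hp) by apply cs_nz. reflexivity.
Qed.

Lemma Nn_cont t : continuity_pt (Nn a b p) t.
Proof.
  apply continuity_pt_locally_ext with (f := fun t => exp (1 / p * ln (Fc t))) (a := 1). lra.
  intros y _. rewrite Nn_formula. reflexivity.
  apply continuity_pt_comp with (f1 := fun t => 1 / p * ln (Fc t)) (f2 := exp).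
  - apply continuity_pt_scal. apply continuity_pt_comp with (f1 := Fc) (f2 := ln).
    + apply Fc_cont.
    + apply derivable_continuous_pt. exists (/ Fc t). apply derivable_pt_lim_ln. apply Fc_pos.
  - apply derivable_continuous_pt, derivable_pt_exp.
Qed.

Lemma gam_cont th eps : 0 < eps -> exists del, 0 < del /\ forall th', Rabs (th' - th) < del ->
  Rabs (fst (gam a b p th') - fst (gam a b p th)) < eps /\ Rabs (snd (gam a b p th') - snd (gam a b p th)) < eps.
Proof.
  intro he.
  assert (C1 : continuity_pt (fun t => cos t / Nn a b p t) th).
  { apply continuity_pt_div. apply continuity_cos. apply Nn_cont. generalize (Nn_pos a b p ha hb hp th); lra. }
  assert (C2 : continuity_pt (fun t => sin t / Nn a b p t) th).
  { apply continuity_pt_div. apply continuity_sin. apply Nn_cont. generalize (Nn_pos a b p ha hb hp th); lra. }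
  destruct (cont_eps _ _ C1 eps he) as [d1 [hd1 H1]].
  destruct (cont_eps _ _ C2 eps he) as [d2 [hd2 H2]].
  exists (Rmin d1 d2). split. apply Rmin_pos; auto.
  intros th' h. rewrite !gam_eq. simpl. split.
  - apply H1. eapply Rlt_le_trans. exact h. apply Rmin_l.
  - apply H2. eapply Rlt_le_trans. exact h. apply Rmin_r.
Qed.

Lemma pnorm_one z : FF a b p z = 1 -> pnorm a b p z = 1.
Proof.
  intro H. destruct z as [x y]. unfold pnorm. fold (FF a b p (x, y)). rewrite H.
  destruct (Req_EM_T 1 0). lra. unfold Rpower. rewrite ln_1, Rmult_0_r, exp_0. auto.
Qed.

Lemma C_is_gam z : FF a b p z = 1 -> exists th, 0 <= th < 2 * PI /\ z = gam a b p th.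
Proof.
  intro H. destruct z as [x y].
  assert (hz : (x, y) <> (0, 0)) by (intro E; injection E; intros; subst; rewrite (FF_0 a b p ha hb hp) in H; lra).
  destruct (polar x y hz) as [th [r [hth [hr [hx hy]]]]].
  exists th. split; auto.
  assert (HN : Nn a b p th = / r).
  { assert (H1 : FF a b p (r * cos th, r * sin th) = Rpower r p * Fc th) by (rewrite (FF_scale a b p ha hb hp) by auto; reflexivity).
    rewrite <- hx, <- hy, H in H1.
    rewrite Nn_formula. unfold Fc in *.
    assert (Fc th = / Rpower r p).
    { unfold Fc. apply Rmult_eq_reg_l with (Rpower r p). rewrite Rinv_r. lra. unfold Rpower; generalize (exp_pos (p * ln r)); lra.
      unfold Rpower; generalize (exp_pos (p * ln r)); lra. }
    unfold Fc in H0. rewrite H0. rewrite ln_Rinv by (unfold Rpower; apply exp_pos).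
    unfold Rpower. rewrite ln_exp. replace (1 / p * - (p * ln r)) with (- ln r) by (field; lra).
    rewrite exp_Ropp, exp_ln by auto. reflexivity. }
  rewrite gam_eq, HN, hx, hy. f_equal; field; lra.
Qed.

End Osec.

End O.
Import O.

Module N.
Open Scope R_scope.
Set Default Proof Using "All".

Lemma le_of_eps A B : (forall eps, 0 < eps -> A < B + eps) -> A <= B.
Proof. intro H. destruct (Rle_lt_dec A B); auto. specialize (H ((A - B) / 2) ltac:(lra)). lra. Qed.

Lemma sqd_cont xs P eps : 0 < eps -> exists rho, 0 < rho /\ forall Q,
  Rabs (fst Q - fst P) < rho -> Rabs (snd Q - snd P) < rho -> Rabs (sqd xs Q - sqd xs P) < eps.
Proof.
  intro he.
  set (K := 2 * Rabs (fst P - fst xs) + 2 * Rabs (snd P - snd xs) + 3).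
  assert (hK : 0 < K) by (unfold K; generalize (Rabs_pos (fst P - fst xs)) (Rabs_pos (snd P - snd xs)); lra).
  exists (Rmin 1 (eps / K)). split. apply Rmin_pos; [lra| apply Rdiv_lt_0_compat; lra].
  intros Q h1 h2.
  assert (r1 : Rmin 1 (eps / K) <= 1) by apply Rmin_l. assert (r2 : Rmin 1 (eps / K) <= eps / K) by apply Rmin_r.
  set (rho := Rmin 1 (eps / K)) in *.
  set (u := fst Q - fst P). set (v := snd Q - snd P).
  assert (E : sqd xs Q - sqd xs P = u * (u + 2 * (fst P - fst xs)) + v * (v + 2 * (snd P - snd xs))) by (unfold u, v, sqd; ring).
  rewrite E.
  eapply Rle_lt_trans. apply Rabs_triang. rewrite !Rabs_mult.
  assert (Rabs (u + 2 * (fst P - fst xs)) <= 1 + 2 * Rabs (fst P - fst xs)).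
  { eapply Rle_trans. apply Rabs_triang. rewrite Rabs_mult, (Rabs_pos_eq 2) by lra. fold u in h1. lra. }
  assert (Rabs (v + 2 * (snd P - snd xs)) <= 1 + 2 * Rabs (snd P - snd xs)).
  { eapply Rle_trans. apply Rabs_triang. rewrite Rabs_mult, (Rabs_pos_eq 2) by lra. fold v in h2. lra. }
  fold u v in h1, h2.
  assert (Rabs u * Rabs (u + 2 * (fst P - fst xs)) <= rho * (1 + 2 * Rabs (fst P - fst xs))).
  { apply Rmult_le_compat; try apply Rabs_pos; lra. }
  assert (Rabs v * Rabs (v + 2 * (snd P - snd xs)) <= rho * (1 + 2 * Rabs (snd P - snd xs))).
  { apply Rmult_le_compat; try apply Rabs_pos; lra. }
  assert (rho * K <= eps).
  { apply Rmult_le_reg_r with (/ K). apply Rinv_0_lt_compat; lra. rewrite Rmult_assoc, Rinv_r by lra. unfold Rdiv in r2. lra. }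
  assert (rho * (1 + 2 * Rabs (fst P - fst xs)) + rho * (1 + 2 * Rabs (snd P - snd xs)) < rho * K).
  { unfold K. assert (0 < rho) by (unfold rho; apply Rmin_pos; [lra| apply Rdiv_lt_0_compat; lra]). nra. }
  lra.
Qed.

Lemma pow2_ge_S (N : nat) : (S N <= 2 ^ N)%nat.
Proof. induction N. simpl; lia. rewrite Nat.pow_succ_r'. lia. Qed.

Lemma mm_ge3' k n : (3 <= k)%nat -> (3 <= mm k n)%nat.
Proof. intro. unfold mm. assert (1 <= 2 ^ (n - 1))%nat by (apply Nat.le_succ_l, Nat.neq_0_lt_0, Nat.pow_nonzero; lia). nia. Qed.

Section Nsec.
Variables a b p : R.
Hypothesis ha : 0 < a.
Hypothesis hb : 0 < b.
Hypothesis hp : 1 < p.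
Variable k : nat.
Hypothesis hk : (3 <= k)%nat.
Variable xs : R * R.
Hypothesis hxs : 1 < FF a b p xs.
Variable x : nat -> R * R.
Hypothesis Hinv : forall n, (1 <= n)%nat -> optP a b p (mm k n) xs (x n).

Notation F := (FF a b p).

Lemma limit_exists : exists y, converges x y /\ forall eps, 0 < eps -> exists N, forall n, (N <= n)%nat ->
   Rabs (fst (x n) - fst y) < eps /\ Rabs (snd (x n) - snd y) < eps.
Proof.
  destruct (R_complete _ (coord_cauchy a b p ha hb hp k hk xs hxs x Hinv fst ltac:(auto))) as [l1 H1].
  destruct (R_complete _ (coord_cauchy a b p ha hb hp k hk xs hxs x Hinv snd ltac:(auto))) as [l2 H2].
  assert (Hc : forall eps, 0 < eps -> exists N, forall n, (N <= n)%nat ->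
     Rabs (fst (x n) - fst (l1, l2)) < eps /\ Rabs (snd (x n) - snd (l1, l2)) < eps).
  { intros eps he. destruct (H1 eps he) as [N1 h1]. destruct (H2 eps he) as [N2 h2].
    exists (S (N1 + N2)). intros n hn. destruct n as [|n]. lia. simpl.
    split; [apply (h1 n)| apply (h2 n)]; lia. }
  exists (l1, l2). split; auto.
  intros eps he. destruct (Hc (eps / 2) ltac:(lra)) as [N HN]. exists N. intros n hn.
  destruct (HN n hn) as [c1 c2]. unfold dist2.
  set (u := fst (x n) - fst (l1, l2)) in *. set (v := snd (x n) - snd (l1, l2)) in *.
  apply Rle_lt_trans with (Rabs u + Rabs v); [|lra].
  rewrite <- (sqrt_Rsqr (Rabs u + Rabs v)) by (generalize (Rabs_pos u) (Rabs_pos v); lra).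
  apply sqrt_le_1_alt. unfold Rsqr. rewrite <- (pow2_abs u), <- (pow2_abs v).
  generalize (Rabs_pos u) (Rabs_pos v). nra.
Qed.

Lemma final_conv : exists y, is_proj (inC a b p) xs y /\ converges x y.
Proof.
  destruct limit_exists as [y [Hconv Hc]].
  exists y. split; auto.
  assert (Hlim : forall n, (1 <= n)%nat -> sqd xs y <= sqd xs (x n)).
  { intros n hn. apply le_of_eps. intros eps he.
    destruct (sqd_cont xs y eps he) as [rho [hr Hr]].
    destruct (Hc rho hr) as [N HN].
    destruct (HN (n + N)%nat ltac:(lia)) as [c1 c2].
    specialize (Hr (x (n + N)%nat) c1 c2).
    assert (H := dec_ineq a b p ha hb hp k hk xs hxs x Hinv n (n + N) hn ltac:(lia)).
    generalize (sqd_ge0 (x n) (x (n + N)%nat)). intro.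
    rewrite Rabs_minus_sym in Hr. assert (sqd xs y - sqd xs (x (n + N)%nat) < eps) by (apply Rle_lt_trans with (Rabs (sqd xs y - sqd xs (x (n + N)%nat))); [apply Rle_abs| auto]).
    lra. }
  assert (HFy : F y <= 1).
  { destruct (Rle_lt_dec (F y) 1) as [h|h]; auto. exfalso.
    destruct (FF_cont a b p ha hb hp (fst y) (snd y) (F y - 1) ltac:(lra)) as [del [hd Hd]].
    destruct (Hc del hd) as [N HN]. destruct (HN (S N) ltac:(lia)) as [c1 c2].
    specialize (Hd _ _ c1 c2). destruct y as [y1 y2]. simpl in Hd.
    assert (F (x (S N)) <= 1).
    { destruct (Hinv (S N) ltac:(lia)) as [hw _]. apply (F_poly a b p ha hb hp (mm k (S N))); auto. apply mm_ge3'; auto. }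
    destruct (x (S N)) as [u1 u2]. simpl in *.
    assert (Rabs (F (u1, u2) - F (y1, y2)) >= F (y1, y2) - 1).
    { rewrite Rabs_minus_sym. rewrite Rabs_pos_eq by lra. lra. }
    lra. }
  assert (Hopt : forall z, F z = 1 -> sqd xs y <= sqd xs z).
  { intros z hz. destruct (Rle_lt_dec (sqd xs y) (sqd xs z)) as [h|h]; auto. exfalso.
    destruct (C_is_gam a b p ha hb hp z hz) as [th [hth Ez]].
    set (eta := sqd xs y - sqd xs z).
    destruct (sqd_cont xs z eta ltac:(unfold eta; lra)) as [rho [hr Hr]].
    destruct (gam_cont a b p ha hb hp th rho hr) as [del [hd Hd]].
    assert (PI_pos := PI_RGT_0).
    destruct (INR_unbounded (2 * PI / del)) as [N hN].
    set (n := S N). set (m := mm k n).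
    assert (hm3 : (3 <= m)%nat) by (apply mm_ge3'; auto).
    assert (HM : 0 < INR m) by (apply lt_0_INR; lia).
    assert (hmN : INR N <= INR m).
    { apply le_INR. unfold m, mm, n. replace (S N - 1)%nat with N by lia. generalize (pow2_ge_S N). nia. }
    assert (hmd : 2 * PI / INR m < del).
    { apply Rmult_lt_reg_r with (INR m). auto. unfold Rdiv. rewrite Rmult_assoc, Rinv_l by lra.
      assert (2 * PI / del < INR m) by lra.
      apply Rmult_lt_reg_r with (/ del). apply Rinv_0_lt_compat; auto.
      replace (del * INR m * / del) with (INR m) by (field; lra). unfold Rdiv in H. lra. }
    destruct (nat_floor m (th * INR m / (2 * PI))) as [s [hs [h1 h2]]].
    { split. apply div_ge0; [apply Rmult_le_pos; lra| lra]. apply Rmult_lt_reg_r with (2 * PI). lra.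
      unfold Rdiv. rewrite Rmult_assoc, Rinv_l by lra. nra. }
    assert (hang : Rabs (ang m s - th) < del).
    { unfold ang.
      assert (2 * INR s * PI / INR m <= th).
      { apply Rmult_le_reg_r with (INR m / (2 * PI)). apply Rdiv_lt_0_compat; lra.
        replace (2 * INR s * PI / INR m * (INR m / (2 * PI))) with (INR s) by (field; lra).
        replace (th * (INR m / (2 * PI))) with (th * INR m / (2 * PI)) by (field; lra). lra. }
      assert (th - 2 * INR s * PI / INR m < 2 * PI / INR m).
      { apply Rmult_lt_reg_r with (INR m / (2 * PI)). apply Rdiv_lt_0_compat; lra.
        replace ((th - 2 * INR s * PI / INR m) * (INR m / (2 * PI))) with (th * INR m / (2 * PI) - INR s) by (field; lra).
        replace (2 * PI / INR m * (INR m / (2 * PI))) with 1 by (field; lra). lra. }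
      rewrite Rabs_minus_sym, Rabs_pos_eq by lra. lra. }
    destruct (Hd (ang m s) hang) as [g1 g2]. rewrite <- Ez in g1, g2.
    assert (HV := Hr (vertex a b p m s) g1 g2).
    assert (Hpoly : polygon a b p m (vertex a b p m s)).
    { exists s. split; auto. exists 0. split. lra. destruct (vertex a b p m s); simpl; f_equal; ring. }
    destruct (Hinv n ltac:(unfold n; lia)) as [_ Ho]. specialize (Ho _ Hpoly).
    specialize (Hlim n ltac:(unfold n; lia)).
    assert (sqd xs (vertex a b p m s) - sqd xs z < eta) by (eapply Rle_lt_trans; [apply Rle_abs| exact HV]).
    unfold eta in *. lra. }
  assert (HFy1 : F y = 1).
  { destruct HFy as [h|h]; auto. exfalso.
    destruct y as [y1 y2]. destruct xs as [x1 x2].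
    set (g := fun l => F (y1 + l * (x1 - y1), y2 + l * (x2 - y2)) - 1).
    assert (gc : continuity g).
    { unfold g. apply continuity_minus. apply (FF_line_cont a b p ha hb hp). apply continuity_const. intros u v; auto. }
    assert (g0 : g 0 < 0).
    { unfold g. replace (y1 + 0 * (x1 - y1)) with y1 by ring. replace (y2 + 0 * (x2 - y2)) with y2 by ring. lra. }
    assert (g1 : 0 < g 1).
    { unfold g. replace (y1 + 1 * (x1 - y1)) with x1 by ring. replace (y2 + 1 * (x2 - y2)) with x2 by ring. lra. }
    destruct (IVT g 0 1 gc ltac:(lra) g0 g1) as [c [hc gcz]].
    assert (c <> 0) by (intro E; subst; lra). assert (c <> 1) by (intro E; subst; lra).
    assert (HC : F (y1 + c * (x1 - y1), y2 + c * (x2 - y2)) = 1) by (unfold g in gcz; lra).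
    specialize (Hopt _ HC).
    assert (E : sqd (x1, x2) (y1 + c * (x1 - y1), y2 + c * (x2 - y2)) = (1 - c) ^ 2 * sqd (x1, x2) (y1, y2)) by (unfold sqd; simpl; ring).
    rewrite E in Hopt.
    assert (0 < sqd (x1, x2) (y1, y2)).
    { destruct (sqd_ge0 (x1, x2) (y1, y2)) as [h'|h']; auto. exfalso.
      unfold sqd in h'; simpl in h'.
      assert (e1 : (x1 - y1) ^ 2 = 0) by (generalize (pow2_ge_0 (x1 - y1)) (pow2_ge_0 (x2 - y2)); lra).
      assert (e2 : (x2 - y2) ^ 2 = 0) by (generalize (pow2_ge_0 (x1 - y1)) (pow2_ge_0 (x2 - y2)); lra).
      rewrite <- Rsqr_pow2 in e1, e2. apply Rsqr_eq_0 in e1. apply Rsqr_eq_0 in e2.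
      assert (x1 = y1) by lra. assert (x2 = y2) by lra. subst. lra. }
    assert ((1 - c) ^ 2 < 1) by nra. nra. }
  split; auto.
  intros z hz. apply dist2_le. apply Hopt. exact hz.
Qed.

End Nsec.

End N.
Import N.


Theorem theorem4p3 (a b p : R) (xs : R * R) :
  0 < a -> 0 < b -> 1 < p ->
  (inD a b p xs -> is_proj (inD a b p) xs xs) /\
  (~ inD a b p xs ->
   forall (k : nat) (x : nat -> R * R),
     (3 <= k)%nat ->
     is_proj (polygon a b p k) xs (x 1%nat) ->
     (forall n, (1 <= n)%nat -> refine_step a b p (2 ^ (n - 1) * k) xs (x n) (x (S n))) ->
     exists y, is_proj (inC a b p) xs y /\ converges x y).
Proof.
  intros ha hb hp. split.
  - intro hD. split; auto. intros z hz. unfold dist2.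
    replace ((fst xs - fst xs) ^ 2 + (snd xs - snd xs) ^ 2) with 0 by ring. rewrite sqrt_0. apply sqrt_pos.
  - intros hnD k x hk hx1 Hstep.
    assert (hxs : 1 < FF a b p xs) by (unfold inD in hnD; unfold FF; lra).
    assert (Hinv : forall n, (1 <= n)%nat -> optP a b p (mm k n) xs (x n)).
    { induction n as [|n IH]; intro hn. lia.
      destruct (Nat.eq_dec n 0) as [e|e].
      - subst. unfold mm. simpl. replace (k + 0)%nat with k by lia.
        destruct hx1 as [h1 H1]. split; auto. intros z hz. apply dist2_le. apply H1; auto.
      - assert (H := IH ltac:(lia)).
        assert (E : mm k (S n) = (2 * mm k n)%nat).
        { unfold mm. replace (S n - 1)%nat with (S (n - 1)) by lia. rewrite Nat.pow_succ_r'. lia. }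
        rewrite E. apply (propagate a b p ha hb hp (mm k n) xs (x n) (x (S n))); auto.
        apply mm_ge3'; auto. apply Hstep. lia. }
    apply (final_conv a b p ha hb hp k hk xs hxs x Hinv).
Qed.
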